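(* Let $\alpha>0$, $A\ge0$, $B>0$, $t>0$, and let $P_n(x,t)$ be the monic polynomials orthogonal on $[0,\infty)$ w.r.t. $w(x,t)=x^\alpha e^{-x}(A+B\theta(x-t))$, with norms $h_n(t)$. Let $R_n(t)=Bt^\alpha e^{-t}\{P_n(t,t)\}^2/h_n(t)$, $r_n(t)=Bt^\alpha e^{-t}P_n(t,t)P_{n-1}(t,t)/h_{n-1}(t)$, $D_n(t)=\prod_{j=0}^{n-1}h_j(t)$ ($D_0=1$) and $H_n(t)=t\frac{d}{dt}\ln D_n(t)$. Then for $n\ge1$ (whenever the denominators are nonzero) $$tR_n=H_n-H_{n+1},$$ $$t\,r_n=\frac{[H_n-n(n+\alpha)](t+H_{n+1}-H_{n-1})+t\,n(n+\alpha)}{t+H_{n+1}-H_{n-1}-2n-\alpha},$$ and $$(t\,r_n)^2=\left[n(n+\alpha)+t\,r_n-H_n\right]\left[(tR_n)^2+tR_n(H_{n+1}+H_{n-1}-2H_n)\right];$$ substituting the first two formulas into the third yields a second-order difference equation in $n$ for $H_n$.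
   Context: $\theta$ is the Heaviside function ($1$ for $x>0$, $0$ otherwise); $P_n(t,t)$ is $P_n(x,t)$ at $x=t$. *)

(* Defs.v *)
From Stdlib Require Import Reals.
From Coquelicot Require Import Coquelicot.
Open Scope R_scope.

Definition theta (y : R) : R := if Rlt_dec 0 y then 1 else 0.

(* x^a for x > 0; set to 0 for x <= 0 (only x = 0 matters on [0,oo), a > 0) *)
Definition xpow (x a : R) : R := if Rlt_dec 0 x then Rpower x a else 0.

Definition weight (alpha A B t x : R) : R :=
  xpow x alpha * exp (- x) * (A + B * theta (x - t)).

Definition int0inf (f : R -> R) : R :=
  RInt_gen f (at_point 0) (Rbar_locally p_infty).

Fixpoint psum (c : nat -> R) (n : nat) (x : R) : R :=
  match n with
  | O => 0
  | S k => psum c k x + c k * x ^ k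
  end.

Definition monic_deg (n : nat) (p : R -> R) : Prop :=
  exists c : nat -> R, forall x, p x = x ^ n + psum c n x.

Definition monic_OPS (alpha A B : R) (P : nat -> R -> R -> R) : Prop :=
  forall s, 0 < s ->
    (forall n, monic_deg n (fun x => P n x s)) /\
    (forall m n, m <> n ->
       is_RInt_gen (fun x => P m x s * P n x s * weight alpha A B s x)
                   (at_point 0) (Rbar_locally p_infty) 0).

Definition hn (alpha A B : R) (P : nat -> R -> R -> R) (n : nat) (t : R) : R :=
  int0inf (fun x => (P n x t) ^ 2 * weight alpha A B t x).

Fixpoint Dn (alpha A B : R) (P : nat -> R -> R -> R) (n : nat) (t : R) : R :=
  match n with
  | O => 1
  | S k => Dn alpha A B P k t * hn alpha A B P k t
  end.

Definition Hn (alpha A B : R) (P : nat -> R -> R -> R) (n : nat) (t : R) : R :=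
  t * Derive (fun s => ln (Dn alpha A B P n s)) t.

Definition Rn_t (alpha A B : R) (P : nat -> R -> R -> R) (n : nat) (t : R) : R :=
  B * xpow t alpha * exp (- t) * (P n t t) ^ 2 / hn alpha A B P n t.

Definition rn_t (alpha A B : R) (P : nat -> R -> R -> R) (n : nat) (t : R) : R :=
  B * xpow t alpha * exp (- t) * P n t t * P (n - 1)%nat t t
    / hn alpha A B P (n - 1)%nat t.

(* Main.v *)
Require Import Defs.
From Stdlib Require Import Reals Lra Lia ZArith FunctionalExtensionality ClassicalEpsilon.
From Coquelicot Require Import Coquelicot.
Open Scope R_scope.

Ltac rring := match goal with |- ?x = ?y => change (x = y :> R); ring end.
Ltac rfield := match goal with |- ?x = ?y => change (x = y :> R); field end.

Lemma xpow_pos x a : 0 < x -> xpow x a = Rpower x a.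
Proof. intros H; unfold xpow; destruct (Rlt_dec 0 x); [reflexivity|lra]. Qed.

Lemma xpow_nonpos x a : x <= 0 -> xpow x a = 0.
Proof. intros H; unfold xpow; destruct (Rlt_dec 0 x); [lra|reflexivity]. Qed.

Lemma xpow_ge0 x a : 0 <= xpow x a.
Proof. unfold xpow; destruct (Rlt_dec 0 x); [unfold Rpower; left; apply exp_pos|lra]. Qed.

Lemma xpow_small a : 0 < a -> forall eps, 0 < eps ->
  exists d, 0 < d /\ forall x, Rabs x < d -> Rabs (xpow x a) < eps.
Proof.
  intros Ha eps He. exists (Rpower eps (/ a)). split.
  { unfold Rpower; apply exp_pos. }
  intros x Hx. destruct (Rle_dec x 0) as [Hn|Hp].
  - rewrite xpow_nonpos by lra. rewrite Rabs_R0; lra.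
  - rewrite xpow_pos by lra. rewrite Rabs_pos_eq in Hx by lra.
    rewrite Rabs_pos_eq by (unfold Rpower; left; apply exp_pos).
    replace eps with (Rpower (Rpower eps (/a)) a).
    + apply Rlt_Rpower_l; lra.
    + rewrite Rpower_mult. rewrite Rinv_l by lra. apply Rpower_1; lra.
Qed.

Lemma Rpower_cont x a : 0 < x -> continuous (fun y => Rpower y a) x.
Proof.
  intros Hx. apply continuity_pt_filterlim.
  apply derivable_continuous_pt.
  exists (a * Rpower x (a - 1)). apply derivable_pt_lim_power; lra.
Qed.

Lemma xpow_cont a x : 0 < a -> continuous (fun y => xpow y a) x.
Proof.
  intros Ha. destruct (Rlt_dec 0 x) as [Hp|Hn].
  - apply continuous_ext_loc with (fun y => Rpower y a).
    + exists (mkposreal x Hp). intros y Hy. simpl in Hy.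
      unfold ball in Hy; simpl in Hy; unfold AbsRing_ball in Hy; simpl in Hy.
      unfold abs, minus, plus, opp in Hy; simpl in Hy.
      rewrite xpow_pos; [reflexivity|]. apply Rabs_def2 in Hy. lra.
    + apply Rpower_cont; exact Hp.
  - destruct (Req_dec x 0) as [H0|H0].
    + subst x. apply continuity_pt_filterlim.
      intros eps He. destruct (xpow_small a Ha eps He) as [d [Hd Hx]].
      exists d. split; [exact Hd|]. intros y [_ Hy].
      unfold R_dist in *. simpl in Hy. simpl.
      rewrite (xpow_nonpos 0) by lra. unfold Rdist in *.
      rewrite Rminus_0_r in *. apply Hx. exact Hy.
    + apply continuous_ext_loc with (fun _ => 0).
      * assert (Hx : 0 < - x) by lra.
        exists (mkposreal (-x) Hx). intros y Hy. simpl in Hy.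
        unfold ball in Hy; simpl in Hy; unfold AbsRing_ball in Hy; simpl in Hy.
        unfold abs, minus, plus, opp in Hy; simpl in Hy.
        rewrite xpow_nonpos; [reflexivity|]. apply Rabs_def2 in Hy. lra.
      * apply continuous_const.
Qed.

Lemma xpow_derive b x : 1 < b -> is_derive (fun y => xpow y b) x (b * xpow x (b - 1)).
Proof.
  intros Hb. destruct (Rlt_dec 0 x) as [Hp|Hn].
  - apply is_derive_ext_loc with (fun y => Rpower y b).
    + exists (mkposreal x Hp). intros y Hy. simpl in Hy.
      unfold ball in Hy; simpl in Hy; unfold AbsRing_ball in Hy; simpl in Hy.
      unfold abs, minus, plus, opp in Hy; simpl in Hy.
      rewrite xpow_pos; [reflexivity|]. apply Rabs_def2 in Hy. lra.
    + rewrite xpow_pos by exact Hp. apply is_derive_Reals.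
      apply derivable_pt_lim_power; lra.
  - destruct (Req_dec x 0) as [H0|H0].
    + subst x. apply is_derive_Reals. intros eps He.
      destruct (xpow_small (b - 1) ltac:(lra) eps He) as [d [Hd Hx]].
      exists (mkposreal d Hd). intros h Hh0 Hh. simpl in Hh.
      rewrite (xpow_nonpos 0 b), (xpow_nonpos 0 (b-1)) by lra.
      rewrite Rmult_0_r, Rplus_0_l, Rminus_0_r, Rminus_0_r.
      destruct (Rle_dec h 0) as [Hn'|Hp'].
      * rewrite xpow_nonpos by lra. unfold Rdiv. rewrite Rmult_0_l, Rabs_R0. lra.
      * rewrite xpow_pos by lra.
        replace (Rpower h b / h) with (xpow h (b - 1)).
        -- apply Hx; exact Hh.
        -- rewrite xpow_pos by lra. replace b with ((b - 1) + 1) at 2 by ring.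
           rewrite Rpower_plus, Rpower_1 by lra. field. lra.
    + apply is_derive_ext_loc with (fun _ => 0).
      * assert (Hx : 0 < - x) by lra.
        exists (mkposreal (-x) Hx). intros y Hy. simpl in Hy.
        unfold ball in Hy; simpl in Hy; unfold AbsRing_ball in Hy; simpl in Hy.
        unfold abs, minus, plus, opp in Hy; simpl in Hy.
        rewrite xpow_nonpos; [reflexivity|]. apply Rabs_def2 in Hy. lra.
      * rewrite xpow_nonpos by lra. rewrite Rmult_0_r. apply is_derive_Reals, derivable_pt_lim_const.
Qed.

Definition gp (a x : R) : R := xpow x a * exp (- x).

Lemma gp_ge0 a x : 0 <= gp a x.
Proof. unfold gp. apply Rmult_le_pos; [apply xpow_ge0|left; apply exp_pos]. Qed.

Lemma exp_cont x : continuous exp x.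
Proof.
  apply continuity_pt_filterlim. apply derivable_continuous_pt.
  exists (exp x). apply derivable_pt_lim_exp.
Qed.

Lemma cont_of_derive (f : R -> R) x l : is_derive f x l -> continuous f x.
Proof.
  intros H. apply continuity_pt_filterlim. apply derivable_continuous_pt.
  exists l. apply is_derive_Reals. exact H.
Qed.

Lemma gp_cont a x : 0 < a -> continuous (gp a) x.
Proof.
  intros Ha. unfold gp.
  apply (continuous_mult (fun y => xpow y a) (fun y => exp (- y))).
  - apply xpow_cont; exact Ha.
  - apply (cont_of_derive _ _ (- exp (- x))). auto_derive; [exact I|ring].
Qed.

Lemma exp_pow_nat (y : R) (n : nat) : exp y ^ n = exp (INR n * y).
Proof.
  induction n as [|n IH].
  - simpl. rewrite Rmult_0_l, exp_0. reflexivity.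
  - rewrite S_INR. simpl pow. rewrite IH. rewrite <- exp_plus. f_equal. ring.
Qed.

Lemma exp_le_mono x y : x <= y -> exp x <= exp y.
Proof. intros H; destruct (Rle_lt_or_eq_dec _ _ H) as [H'|H'];
  [left; apply exp_increasing; exact H'|rewrite H'; lra]. Qed.

Lemma xpow_le_pow a x N : 0 < a -> a <= INR N -> 0 <= x -> xpow x a <= 1 + x ^ N.
Proof.
  intros Ha HN Hx. pose proof (pow_le x N Hx) as HxN.
  destruct (Req_dec x 0) as [H0|H0].
  - subst. rewrite xpow_nonpos by lra. lra.
  - rewrite xpow_pos by lra. destruct (Rle_dec x 1) as [H1|H1].
    + assert (Rpower x a <= 1).
      { unfold Rpower. rewrite <- exp_0. apply exp_le_mono.
        assert (ln x <= 0) by (rewrite <- ln_1; apply ln_le; lra).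
        nra. }
      lra.
    + rewrite <- (Rpower_pow N x) by lra.
      destruct (Req_dec a (INR N)) as [E|E].
      * rewrite E; lra.
      * assert (Rpower x a < Rpower x (INR N)) by (apply Rpower_lt; lra). lra.
Qed.

Lemma exists_nat_ge a : exists N : nat, a <= INR N /\ (1 <= N)%nat.
Proof.
  destruct (archimed (Rabs a)) as [H1 H2].
  assert (0 <= IZR (up (Rabs a))) by (pose proof (Rabs_pos a); lra).
  exists (S (Z.to_nat (up (Rabs a)))). split; [|lia].
  rewrite S_INR, INR_IZR_INZ, Z2Nat.id.
  - pose proof (Rle_abs a). lra.
  - apply le_IZR. exact H.
Qed.

Lemma gp_bound a : 0 < a -> exists C, 0 < C /\ forall x, 0 <= x -> gp a x <= C * exp (- x / 2).
Proof.
  intros Ha. destruct (exists_nat_ge a) as [N [HN HN1]].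
  assert (HNp : 0 < INR N) by (apply lt_0_INR; lia).
  set (K := (2 * INR N) ^ N).
  assert (HK : 0 < K) by (unfold K; apply pow_lt; lra).
  exists (1 + K). split; [lra|]. intros x Hx.
  assert (Hpow : x ^ N <= K * exp (x / 2)).
  { assert (Hy : 0 <= x / (2 * INR N)) by (apply Rmult_le_pos; [lra|left; apply Rinv_0_lt_compat; lra]).
    assert (H1 : (x / (2 * INR N)) ^ N <= exp (x / (2 * INR N)) ^ N).
    { apply pow_incr. split; [exact Hy|]. pose proof (exp_ineq1_le (x / (2 * INR N))). lra. }
    rewrite exp_pow_nat in H1. replace (INR N * (x / (2 * INR N))) with (x / 2) in H1 by (field; lra).
    replace (x ^ N) with (K * (x / (2 * INR N)) ^ N).
    - apply Rmult_le_compat_l; [lra|exact H1].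
    - unfold K. rewrite <- Rpow_mult_distr. f_equal. field. lra. }
  unfold gp. pose proof (xpow_le_pow a x N Ha HN Hx) as Hxp.
  assert (He : exp (- x) <= exp (- x / 2)) by (apply exp_le_mono; lra).
  assert (E2 : exp (x / 2) * exp (- x) = exp (- x / 2)) by (rewrite <- exp_plus; f_equal; field).
  pose proof (exp_pos (- x)). pose proof (exp_pos (- x / 2)).
  apply Rle_trans with ((1 + x ^ N) * exp (- x)).
  - apply Rmult_le_compat_r; lra.
  - apply Rle_trans with (exp (- x) + K * exp (x / 2) * exp (- x)).
    + rewrite Rmult_plus_distr_r, Rmult_1_l. apply Rplus_le_compat_l. apply Rmult_le_compat_r; lra.
    + rewrite Rmult_assoc, E2. nra.
Qed.

Lemma mono_lim (F : R -> R) s M :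
  (forall y z, s <= y -> y <= z -> F y <= F z) -> (forall y, s <= y -> F y <= M) ->
  exists l, filterlim F (Rbar_locally p_infty) (locally l).
Proof.
  intros Hm Hb.
  set (E := fun v => exists y, s <= y /\ v = F y).
  assert (HE : bound E) by (exists M; intros v [y [Hy ->]]; apply Hb; exact Hy).
  assert (HE2 : exists v, E v) by (exists (F s); exists s; split; [lra|reflexivity]).
  destruct (completeness E HE HE2) as [l [Hub Hlub]].
  exists l. apply filterlim_locally. intros eps.
  assert (Hex : exists y, s <= y /\ l - eps < F y).
  { apply Classical_Prop.NNPP. intros Hn.
    assert (l <= l - eps).
    { apply Hlub. intros v [y [Hy ->]].
      destruct (Rle_dec (F y) (l - eps)) as [H|H]; [exact H|].
      exfalso. apply Hn. exists y. split; [exact Hy|lra]. }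
    pose proof (cond_pos eps). lra. }
  destruct Hex as [y0 [Hy0 Hly]].
  exists y0. intros y Hy.
  assert (F y <= l) by (apply Hub; exists y; split; [lra|reflexivity]).
  assert (F y0 <= F y) by (apply Hm; lra).
  unfold ball; simpl; unfold AbsRing_ball; simpl. unfold abs, minus, plus, opp; simpl.
  apply Rabs_def1; lra.
Qed.

Lemma mkgen (g : R -> R) s (F : R -> R) l :
  (forall y, s < y -> is_RInt g s y (F y)) ->
  filterlim F (Rbar_locally p_infty) (locally l) ->
  is_RInt_gen g (at_point s) (Rbar_locally p_infty) l.
Proof.
  intros HI HF P HP. unfold filtermapi.
  destruct (HF P HP) as [M HM].
  apply Filter_prod with (fun a => a = s) (fun b => Rmax M s < b).
  - reflexivity.
  - exists (Rmax M s). intros x Hx; exact Hx.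
  - intros a b Ha Hb. simpl. subst a. exists (F b). split.
    + apply HI. pose proof (Rmax_r M s). lra.
    + apply HM. pose proof (Rmax_l M s). lra.
Qed.

Lemma gp_exint a u v : 0 < a -> ex_RInt (gp a) u v.
Proof. intros Ha. apply (@ex_RInt_continuous R_CompleteNormedModule). intros z _. apply gp_cont; exact Ha. Qed.

Lemma exp_half_int C s y :
  is_RInt (fun x => C * exp (- x / 2)) s y (- 2 * C * exp (- y / 2) - (- 2 * C * exp (- s / 2))).
Proof.
  apply (is_RInt_derive (fun x => - 2 * C * exp (- x / 2))).
  - intros x _. auto_derive; [exact I|]. change (-2 * C * (- (1) * / 2 * exp (- x * / 2)) = C * exp (- x / 2)). unfold Rdiv. field.
  - intros x _. apply (cont_of_derive _ _ (C * (- / 2) * exp (- x / 2))).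
    auto_derive; [exact I|unfold Rdiv; ring].
Qed.

Lemma Tint_ex a s : 0 < a -> 0 <= s ->
  exists l, is_RInt_gen (gp a) (at_point s) (Rbar_locally p_infty) l.
Proof.
  intros Ha Hs. destruct (gp_bound a Ha) as [C [HC HCb]].
  set (F := fun y => RInt (gp a) s y).
  destruct (mono_lim F s (2 * C * exp (- s / 2))) as [l Hl].
  - intros y z Hy Hz. unfold F.
    rewrite <- (RInt_Chasles (gp a) s y z) by (apply gp_exint; exact Ha).
    assert (0 <= RInt (gp a) y z).
    { apply RInt_ge_0; [exact Hz|apply gp_exint; exact Ha|]. intros; apply gp_ge0. }
    simpl. unfold plus; simpl. lra.
  - intros y Hy. unfold F.
    apply Rle_trans with (RInt (fun x => C * exp (- x / 2)) s y).
    + apply RInt_le; [exact Hy|apply gp_exint; exact Ha| |].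
      * eexists. apply exp_half_int.
      * intros x Hx. apply HCb. lra.
    + rewrite (is_RInt_unique _ _ _ _ (exp_half_int C s y)).
      pose proof (exp_pos (- y / 2)). nra.
  - exists l. apply (mkgen _ _ F); [|exact Hl].
    intros y Hy. apply (@RInt_correct R_CompleteNormedModule). apply gp_exint; exact Ha.
Qed.

Definition Tint (a s : R) : R := RInt_gen (gp a) (at_point s) (Rbar_locally p_infty).

Lemma Tint_correct a s : 0 < a -> 0 <= s ->
  is_RInt_gen (gp a) (at_point s) (Rbar_locally p_infty) (Tint a s).
Proof.
  intros Ha Hs. destruct (Tint_ex a s Ha Hs) as [l Hl].
  unfold Tint. rewrite (is_RInt_gen_unique _ l Hl). exact Hl.
Qed.

Section GenHelpers.
Context {Fa Fb : (R -> Prop) -> Prop} {FFa : Filter Fa} {FFb : Filter Fb}.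

Lemma gen_ext_eq (f g : R -> R) l : (forall x, f x = g x) ->
  is_RInt_gen f Fa Fb l -> is_RInt_gen g Fa Fb l.
Proof.
  intros H. apply is_RInt_gen_ext. apply filter_forall. intros ab x _. apply H.
Qed.

Lemma gen_plus (f g : R -> R) lf lg : is_RInt_gen f Fa Fb lf -> is_RInt_gen g Fa Fb lg ->
  is_RInt_gen (fun x => f x + g x) Fa Fb (lf + lg).
Proof. intros H1 H2. apply (is_RInt_gen_plus _ _ _ _ H1 H2). Qed.

Lemma gen_scal (f : R -> R) k l : is_RInt_gen f Fa Fb l ->
  is_RInt_gen (fun x => k * f x) Fa Fb (k * l).
Proof. intros H1. apply (is_RInt_gen_scal _ _ _ H1). Qed.

End GenHelpers.

Lemma gen_unique (f : R -> R) s l1 l2 :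
  is_RInt_gen f (at_point s) (Rbar_locally p_infty) l1 ->
  is_RInt_gen f (at_point s) (Rbar_locally p_infty) l2 -> l1 = l2.
Proof.
  intros H1 H2. rewrite <- (is_RInt_gen_unique _ _ H1). rewrite <- (is_RInt_gen_unique _ _ H2).
  reflexivity.
Qed.

Lemma gp_decay b : 0 < b -> forall eps, 0 < eps -> exists M, forall y, M < y -> gp b y < eps.
Proof.
  intros Hb eps He. destruct (gp_bound b Hb) as [C [HC HCb]].
  exists (Rmax 0 (- 2 * ln (eps / C))). intros y Hy.
  pose proof (Rmax_l 0 (- 2 * ln (eps / C))). pose proof (Rmax_r 0 (- 2 * ln (eps / C))).
  apply Rle_lt_trans with (C * exp (- y / 2)); [apply HCb; lra|].
  assert (exp (- y / 2) < eps / C).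
  { rewrite <- (exp_ln (eps / C)) by (apply Rdiv_lt_0_compat; lra).
    apply exp_increasing. lra. }
  apply Rmult_lt_compat_l with (r := C) in H1; [|lra].
  replace (C * (eps / C)) with eps in H1 by (field; lra). exact H1.
Qed.

Lemma Tint_rec a s : 0 < a -> 0 <= s ->
  Tint (a + 1) s = (a + 1) * Tint a s + gp (a + 1) s.
Proof.
  intros Ha Hs.
  set (phi := fun x => - gp (a + 1) x).
  set (dphi := fun x => gp (a + 1) x - (a + 1) * gp a x).
  assert (Hd : forall x, is_derive phi x (dphi x)).
  { intros x. unfold phi, dphi, gp.
    assert (H1 := xpow_derive (a + 1) x ltac:(lra)).
    replace (a + 1 - 1) with a in H1 by ring.
    apply (is_derive_ext (fun y => - (xpow y (a + 1) * exp (- y)))).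
    { intros; reflexivity. }
    evar (l : R). replace (xpow x (a + 1) * exp (- x) - (a + 1) * (xpow x a * exp (- x))) with l.
    - apply (@is_derive_opp R_AbsRing R_NormedModule).
      apply (is_derive_mult (fun y => xpow y (a + 1)) (fun y => exp (- y))).
      + exact H1.
      + auto_derive; [exact I|reflexivity].
      + intros; apply Rmult_comm.
    - unfold l. simpl. unfold plus, mult, opp; simpl. ring. }
  assert (HD : forall x, Derive phi x = dphi x) by (intros x; apply is_derive_unique, Hd).
  assert (Hgen : is_RInt_gen (Derive phi) (at_point s) (Rbar_locally p_infty) (0 - phi s)).
  { apply is_RInt_gen_Derive.
    - apply filter_forall. intros ab x _. exists (dphi x). apply Hd.
    - apply filter_forall. intros ab x _. apply continuous_ext with dphi.
      { intros; symmetry; apply HD. }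
      unfold dphi. apply (continuous_plus (fun y => gp (a + 1) y) (fun y => opp ((a + 1) * gp a y))).
      + apply gp_cont; lra.
      + apply (continuous_opp (fun y => (a + 1) * gp a y)).
        apply (continuous_mult (fun _ => a + 1) (gp a)); [apply continuous_const|apply gp_cont; lra].
    - intros P HP. exact (locally_singleton _ _ HP).
    - apply filterlim_locally. intros eps.
      destruct (gp_decay (a + 1) ltac:(lra) eps (cond_pos eps)) as [M HM].
      exists M. intros y Hy. unfold ball; simpl; unfold AbsRing_ball; simpl.
      unfold abs, minus, plus, opp; simpl. unfold phi.
      rewrite Ropp_0, Rplus_0_r, Rabs_Ropp, Rabs_pos_eq by apply gp_ge0. apply HM; exact Hy. }
  assert (H2 : is_RInt_gen (gp (a + 1)) (at_point s) (Rbar_locally p_infty)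
                 ((0 - phi s) + (a + 1) * Tint a s)).
  { apply gen_ext_eq with (fun x => Derive phi x + (a + 1) * gp a x).
    - intros x. rewrite HD. unfold dphi. ring.
    - apply gen_plus; [exact Hgen|]. apply gen_scal. apply Tint_correct; lra. }
  rewrite (gen_unique _ _ _ _ (Tint_correct (a + 1) s ltac:(lra) Hs) H2).
  unfold phi. ring.
Qed.

Lemma Tint_split a u : 0 < a -> 0 <= u -> Tint a 0 = RInt (gp a) 0 u + Tint a u.
Proof.
  intros Ha Hu.
  assert (H1 : is_RInt_gen (gp a) (at_point 0) (at_point u) (RInt (gp a) 0 u)).
  { apply is_RInt_gen_at_point. apply (@RInt_correct R_CompleteNormedModule). apply gp_exint; exact Ha. }
  assert (H := is_RInt_gen_Chasles (gp a) u _ _ H1 (Tint_correct a u Ha Hu)).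
  apply (gen_unique _ _ _ _ (Tint_correct a 0 Ha (Rle_refl 0)) H).
Qed.

Lemma Tint_deriv a s : 0 < a -> 0 < s -> is_derive (fun u => Tint a u) s (- gp a s).
Proof.
  intros Ha Hs.
  apply is_derive_ext_loc with (fun u => Tint a 0 - RInt (gp a) 0 u).
  - exists (mkposreal s Hs). intros y Hy. simpl in Hy.
    unfold ball in Hy; simpl in Hy; unfold AbsRing_ball in Hy; simpl in Hy.
    unfold abs, minus, plus, opp in Hy; simpl in Hy. apply Rabs_def2 in Hy.
    cbv beta. rewrite (Tint_split a y Ha) by lra. lra.
  - replace (- gp a s) with (0 - gp a s) by ring.
    apply (@is_derive_minus R_AbsRing R_NormedModule (fun _ => Tint a 0) (RInt (gp a) 0)).
    + apply is_derive_Reals, derivable_pt_lim_const.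
    + apply (is_derive_RInt (gp a) (RInt (gp a) 0) 0 s).
      * apply filter_forall. intros y. apply (@RInt_correct R_CompleteNormedModule).
        apply gp_exint; exact Ha.
      * apply gp_cont; exact Ha.
Qed.

Lemma pow_xpow x k al : x ^ k * xpow x al = xpow x (INR k + al).
Proof.
  destruct (Rlt_dec 0 x) as [Hp|Hn].
  - rewrite !xpow_pos by exact Hp. rewrite Rpower_plus, Rpower_pow by exact Hp. reflexivity.
  - rewrite !xpow_nonpos by lra. ring.
Qed.

Lemma theta_int b s : 0 < b -> 0 < s ->
  is_RInt_gen (fun x => theta (x - s) * gp b x) (at_point 0) (Rbar_locally p_infty) (Tint b s).
Proof.
  intros Hb Hs.
  replace (Tint b s) with (plus 0 (Tint b s)) by (unfold plus; simpl; ring).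
  eapply (@is_RInt_gen_Chasles R_NormedModule _ _ _ _ _ s).
  - apply is_RInt_gen_at_point.
    replace 0 with (scal (s - 0) 0) at 2 by (apply (@scal_zero_r R_AbsRing R_NormedModule)).
    apply is_RInt_ext with (fun _ => 0); [|apply (@is_RInt_const R_NormedModule)].
    intros x Hx. rewrite Rmin_left, Rmax_right in Hx by lra.
    unfold theta. destruct (Rlt_dec 0 (x - s)); [lra|rring].
  - apply is_RInt_gen_ext with (gp b); [|apply Tint_correct; lra].
    apply Filter_prod with (fun a => a = s) (fun c => s < c).
    + reflexivity.
    + exists s. intros; assumption.
    + intros a c Ha Hc x Hx. simpl in Hx. subst a.
      rewrite Rmin_left, Rmax_right in Hx by lra.
      unfold theta. destruct (Rlt_dec 0 (x - s)); [rring|lra].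
Qed.

Definition mom (al A B : R) (k : nat) (s : R) : R :=
  A * Tint (INR k + al) 0 + B * Tint (INR k + al) s.

Lemma mom_int al A B k s : 0 < al -> 0 < s ->
  is_RInt_gen (fun x => x ^ k * weight al A B s x) (at_point 0) (Rbar_locally p_infty) (mom al A B k s).
Proof.
  intros Hal Hs. assert (Hk : 0 < INR k + al) by (pose proof (pos_INR k); lra).
  apply gen_ext_eq with (fun x => A * gp (INR k + al) x + B * (theta (x - s) * gp (INR k + al) x)).
  - intros x. unfold weight, gp. rewrite <- pow_xpow. ring.
  - apply gen_plus; apply gen_scal; [apply Tint_correct; lra|apply theta_int; lra].
Qed.

Lemma mom_rec al A B k s : 0 < al -> 0 < s ->
  mom al A B (S k) s = (INR k + 1 + al) * mom al A B k s + B * s ^ (S k) * xpow s al * exp (- s).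
Proof.
  intros Hal Hs. assert (Hk : 0 < INR k + al) by (pose proof (pos_INR k); lra).
  unfold mom. rewrite S_INR.
  replace (INR k + 1 + al) with ((INR k + al) + 1) by ring.
  rewrite !Tint_rec by lra.
  unfold gp. rewrite (xpow_nonpos 0) by lra.
  replace (INR k + al + 1) with (INR (S k) + al) by (rewrite S_INR; ring).
  rewrite <- (pow_xpow s (S k) al). ring.
Qed.

Lemma mom_deriv al A B k s : 0 < al -> 0 < s ->
  is_derive (mom al A B k) s (- (B * s ^ k * xpow s al * exp (- s))).
Proof.
  intros Hal Hs. assert (Hk : 0 < INR k + al) by (pose proof (pos_INR k); lra).
  unfold mom.
  apply is_derive_Reals.
  replace (- (B * s ^ k * xpow s al * exp (- s))) with (0 + B * (- gp (INR k + al) s)).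
  - apply derivable_pt_lim_plus; [apply derivable_pt_lim_const|].
    apply derivable_pt_lim_scal. apply is_derive_Reals, Tint_deriv; lra.
  - unfold gp. rewrite <- pow_xpow. ring.
Qed.

Fixpoint fsum (g : nat -> R) (N : nat) : R :=
  match N with O => 0 | S k => fsum g k + g k end.

Lemma psum_fsum c N x : psum c N x = fsum (fun k => c k * x ^ k) N.
Proof. induction N; simpl; [reflexivity|rewrite IHN; reflexivity]. Qed.

Lemma fsum_ext g h N : (forall k, (k < N)%nat -> g k = h k) -> fsum g N = fsum h N.
Proof. induction N; intros H; simpl; [reflexivity|]. rewrite IHN by (intros; apply H; lia).
  rewrite H by lia. reflexivity. Qed.

Lemma fsum_plus g h N : fsum (fun k => g k + h k) N = fsum g N + fsum h N.
Proof. induction N; simpl; [ring|rewrite IHN; ring]. Qed.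

Lemma fsum_minus g h N : fsum (fun k => g k - h k) N = fsum g N - fsum h N.
Proof. induction N; simpl; [ring|rewrite IHN; ring]. Qed.

Lemma fsum_scal a g N : fsum (fun k => a * g k) N = a * fsum g N.
Proof. induction N; simpl; [ring|rewrite IHN; ring]. Qed.

Lemma fsum_zero N : fsum (fun _ => 0) N = 0.
Proof. induction N; simpl; [ring|rewrite IHN; ring]. Qed.

Lemma fsum_pad g N M : (N <= M)%nat -> fsum g N = fsum (fun k => if (k <? N)%nat then g k else 0) M.
Proof.
  intros H. induction M.
  - assert (N = 0%nat) by lia. subst. reflexivity.
  - destruct (Nat.eq_dec N (S M)) as [E|E].
    + subst N. simpl. f_equal.
      * apply fsum_ext. intros k Hk. destruct (k <? S M)%nat eqn:Ek; [reflexivity|].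
        apply Nat.ltb_ge in Ek. lia.
      * destruct (M <? S M)%nat eqn:Ek; [reflexivity|]. apply Nat.ltb_ge in Ek. lia.
    + simpl. rewrite <- IHM by lia. destruct (M <? N)%nat eqn:Ek; [apply Nat.ltb_lt in Ek; lia|ring].
Qed.

Lemma fsum_shift g N : fsum g (S N) = g O + fsum (fun k => g (S k)) N.
Proof. induction N; simpl in *; [ring|]. rewrite IHN. ring. Qed.

Lemma fsum_swap (g : nat -> nat -> R) N M :
  fsum (fun i => fsum (fun j => g i j) M) N = fsum (fun j => fsum (fun i => g i j) N) M.
Proof.
  induction N; simpl.
  - rewrite fsum_zero. reflexivity.
  - rewrite IHN. rewrite <- fsum_plus. reflexivity.
Qed.

Definition IsPoly (N : nat) (f : R -> R) : Prop := exists c : nat -> R, forall x, f x = psum c N x.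
Definition IsP (f : R -> R) : Prop := exists N, IsPoly N f.

Lemma IsPoly_ext N f g : (forall x, f x = g x) -> IsPoly N f -> IsPoly N g.
Proof. intros H [c Hc]. exists c. intros x. rewrite <- H. apply Hc. Qed.

Lemma IsPoly_mono N M f : (N <= M)%nat -> IsPoly N f -> IsPoly M f.
Proof.
  intros H [c Hc]. exists (fun k => if (k <? N)%nat then c k else 0). intros x.
  rewrite Hc, !psum_fsum, (fsum_pad _ N M H). apply fsum_ext. intros k _.
  destruct (k <? N)%nat; ring.
Qed.

Lemma IsPoly_plus N f g : IsPoly N f -> IsPoly N g -> IsPoly N (fun x => f x + g x).
Proof.
  intros [c Hc] [d Hd]. exists (fun k => c k + d k). intros x.
  rewrite Hc, Hd, !psum_fsum, <- fsum_plus. apply fsum_ext. intros; ring.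
Qed.

Lemma IsPoly_scal N a f : IsPoly N f -> IsPoly N (fun x => a * f x).
Proof.
  intros [c Hc]. exists (fun k => a * c k). intros x.
  rewrite Hc, !psum_fsum, <- fsum_scal. apply fsum_ext. intros; ring.
Qed.

Lemma IsPoly_zero N : IsPoly N (fun _ => 0).
Proof. exists (fun _ => 0). intros x. rewrite psum_fsum. symmetry.
  transitivity (fsum (fun _ => 0) N); [apply fsum_ext; intros; ring|apply fsum_zero]. Qed.

Lemma IsPoly_mulx N f : IsPoly N f -> IsPoly (S N) (fun x => x * f x).
Proof.
  intros [c Hc]. exists (fun k => match k with O => 0 | S j => c j end). intros x.
  rewrite Hc, !psum_fsum, fsum_shift. simpl. rewrite Rmult_0_l, Rplus_0_l.
  rewrite <- fsum_scal. apply fsum_ext. intros; ring.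
Qed.

Definition shiftc (c : nat -> R) (k : nat) : R := match k with O => 0 | S j => c j end.

Lemma psum_mulx c N x : x * psum c N x = psum (shiftc c) (S N) x.
Proof.
  rewrite !psum_fsum, fsum_shift. simpl. rewrite Rmult_0_l, Rplus_0_l.
  rewrite <- fsum_scal. apply fsum_ext. intros; ring.
Qed.

Lemma psum_top c N x : psum c (S N) x = psum c N x + c N * x ^ N.
Proof. reflexivity. Qed.

Lemma psum_ext c d N x : (forall k, (k < N)%nat -> c k = d k) -> psum c N x = psum d N x.
Proof. intros H. rewrite !psum_fsum. apply fsum_ext. intros k Hk. rewrite H by exact Hk. reflexivity. Qed.

Lemma IsPoly_const c : IsPoly 1 (fun _ => c).
Proof. exists (fun _ => c). intros x. simpl. ring. Qed.

Lemma IsPoly_pow j : IsPoly (S j) (fun x => x ^ j).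
Proof.
  induction j.
  - apply IsPoly_ext with (fun _ => 1); [intros; simpl; ring|apply IsPoly_const].
  - apply (IsPoly_mulx (S j) (fun x => x ^ j)) in IHj. destruct IHj as [c Hc].
    exists c. intros x. rewrite <- Hc. reflexivity.
Qed.


Lemma IsPoly_psum c N : IsPoly N (psum c N).
Proof. exists c. reflexivity. Qed.

Lemma IsPoly_mulpow N j f : IsPoly N f -> IsPoly (N + j) (fun x => x ^ j * f x).
Proof.
  intros H. induction j.
  - rewrite Nat.add_0_r. apply IsPoly_ext with f; [intros; simpl; ring|exact H].
  - replace (N + S j)%nat with (S (N + j)) by lia.
    apply IsPoly_ext with (fun x => x * (x ^ j * f x)); [intros; simpl; ring|].
    apply IsPoly_mulx. exact IHj.
Qed.

Lemma IsPoly_mult N M f g : IsPoly N f -> IsPoly M g -> IsPoly (N + M) (fun x => f x * g x).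
Proof.
  intros Hf [d Hd]. apply IsPoly_ext with (fun x => f x * psum d M x).
  { intros; rewrite Hd; reflexivity. }
  clear Hd g. induction M.
  - simpl. apply IsPoly_ext with (fun _ => 0); [intros; ring|apply IsPoly_zero].
  - simpl. apply IsPoly_ext with (fun x => f x * psum d M x + d M * (x ^ M * f x)).
    { intros; ring. }
    apply IsPoly_plus.
    + apply IsPoly_mono with (N + M)%nat; [lia|exact IHM].
    + apply IsPoly_scal. apply IsPoly_mono with (N + M)%nat; [lia|]. apply IsPoly_mulpow; exact Hf.
Qed.

Lemma IsP_plus f g : IsP f -> IsP g -> IsP (fun x => f x + g x).
Proof.
  intros [N Hf] [M Hg]. exists (N + M)%nat. apply IsPoly_plus.
  - apply IsPoly_mono with N; [lia|exact Hf].
  - apply IsPoly_mono with M; [lia|exact Hg].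
Qed.

Lemma IsP_mult f g : IsP f -> IsP g -> IsP (fun x => f x * g x).
Proof. intros [N Hf] [M Hg]. exists (N + M)%nat. apply IsPoly_mult; assumption. Qed.

Lemma IsP_const c : IsP (fun _ => c).
Proof. exists 1%nat. apply IsPoly_const. Qed.

Lemma IsP_id : IsP (fun x => x).
Proof. exists 2%nat. apply IsPoly_ext with (fun x => x ^ 1); [intros; simpl; ring|apply IsPoly_pow]. Qed.

Lemma IsP_pow j : IsP (fun x => x ^ j).
Proof. exists (S j). apply IsPoly_pow. Qed.

Lemma IsP_minus f g : IsP f -> IsP g -> IsP (fun x => f x - g x).
Proof.
  intros Hf Hg. apply IsP_plus with (g := fun x => - g x); [exact Hf|].
  destruct (IsP_mult (fun _ => -1) g (IsP_const (-1)) Hg) as [N HN].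
  exists N. apply IsPoly_ext with (fun x => -1 * g x); [intros; ring|exact HN].
Qed.

Lemma IsP_ext f g : (forall x, f x = g x) -> IsP f -> IsP g.
Proof. intros H [N HN]. exists N. apply IsPoly_ext with f; assumption. Qed.

Lemma IsP_of N f : IsPoly N f -> IsP f.
Proof. intros H; exists N; exact H. Qed.

Ltac isp := repeat match goal with
  | |- IsP (fun x => @?f x + @?g x) => apply (IsP_plus f g)
  | |- IsP (fun x => @?f x - @?g x) => apply (IsP_minus f g)
  | |- IsP (fun x => @?f x * @?g x) => apply (IsP_mult f g)
  | |- IsP (fun x => ?c) => apply IsP_const
  | |- IsP (fun x => x) => apply IsP_id
  | |- IsP (fun x => x ^ ?j) => apply IsP_pow
  | |- IsP (fun x => @?f x ^ 2) => apply (IsP_ext (fun x => f x * f x)); [intros; simpl; ring|]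
  | |- IsP (fun x => - @?f x) => apply (IsP_ext (fun x => (-1) * f x)); [intros; ring|]
  end.

Fixpoint dps (c : nat -> R) (N : nat) (x : R) : R :=
  match N with O => 0 | S k => dps c k x + c k * (INR k * x ^ (Nat.pred k)) end.

Lemma psum_derive c N x : is_derive (psum c N) x (dps c N x).
Proof.
  induction N; simpl.
  - apply is_derive_Reals, derivable_pt_lim_const.
  - apply is_derive_Reals. apply derivable_pt_lim_plus.
    + apply is_derive_Reals. exact IHN.
    + apply derivable_pt_lim_scal. apply derivable_pt_lim_pow.
Qed.

Lemma x_dps c N x : x * dps c N x = psum (fun k => INR k * c k) N x.
Proof.
  induction N; simpl; [ring|]. rewrite <- IHN.
  destruct N; simpl; ring.
Qed.

Lemma psum_exd c N x : ex_derive (psum c N) x.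
Proof. eexists; apply psum_derive. Qed.

Lemma IsPoly_exd N f x : IsPoly N f -> ex_derive f x.
Proof.
  intros [c Hc]. apply ex_derive_ext with (psum c N); [intros; rewrite Hc; reflexivity|].
  apply psum_exd.
Qed.

Lemma IsP_exd f x : IsP f -> ex_derive f x.
Proof. intros [N H]; apply IsPoly_exd with N; exact H. Qed.

Lemma Derive_IsPoly c N f : (forall x, f x = psum c N x) ->
  forall x, x * Derive f x = psum (fun k => INR k * c k) N x.
Proof.
  intros Hf x. rewrite (Derive_ext f (psum c N)) by (intros; apply Hf).
  rewrite (is_derive_unique _ _ _ (psum_derive c N x)). apply x_dps.
Qed.

Lemma IsPoly_xD N f : IsPoly N f -> IsPoly N (fun x => x * Derive f x).
Proof. intros [c Hc]. eexists. apply Derive_IsPoly. exact Hc. Qed.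

Lemma IsP_xD f : IsP f -> IsP (fun x => x * Derive f x).
Proof. intros [N H]. exists N. apply IsPoly_xD; exact H. Qed.

Section LLayer.
Variables al A B s : R.
Hypothesis Hal : 0 < al.
Hypothesis HA : 0 <= A.
Hypothesis HB : 0 < B.
Hypothesis Hs : 0 < s.

Definition w (x : R) := weight al A B s x.
Definition Lw (f : R -> R) : R := int0inf (fun x => f x * w x).
Definition rho : R := B * xpow s al * exp (- s).

Lemma gen_zero : is_RInt_gen (fun _ => 0) (at_point 0) (Rbar_locally p_infty) 0.
Proof.
  apply gen_ext_eq with (fun x => 0 * (x ^ 0 * w x)); [intros; ring|].
  replace 0 with (0 * mom al A B 0 s) at 2 by ring. apply gen_scal. apply mom_int; assumption.
Qed.

Lemma Lw_psum_gen c N : is_RInt_gen (fun x => psum c N x * w x) (at_point 0) (Rbar_locally p_infty)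
  (fsum (fun k => c k * mom al A B k s) N).
Proof.
  induction N; simpl.
  - apply gen_ext_eq with (fun _ => 0); [intros; ring|apply gen_zero].
  - apply gen_ext_eq with (fun x => psum c N x * w x + c N * (x ^ N * w x)); [intros; ring|].
    apply gen_plus; [exact IHN|]. apply gen_scal. apply mom_int; assumption.
Qed.

Lemma Lw_val f c N : (forall x, f x = psum c N x) -> Lw f = fsum (fun k => c k * mom al A B k s) N.
Proof.
  intros H. unfold Lw, int0inf. apply is_RInt_gen_unique.
  apply gen_ext_eq with (fun x => psum c N x * w x); [intros; rewrite H; reflexivity|].
  apply Lw_psum_gen.
Qed.

Lemma Lw_correct f : IsP f -> is_RInt_gen (fun x => f x * w x) (at_point 0) (Rbar_locally p_infty) (Lw f).
Proof.
  intros [N [c Hc]]. rewrite (Lw_val f c N Hc).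
  apply gen_ext_eq with (fun x => psum c N x * w x); [intros; rewrite Hc; reflexivity|].
  apply Lw_psum_gen.
Qed.

Lemma Lw_ext f g : (forall x, f x = g x) -> Lw f = Lw g.
Proof. intros H. assert (f = g) by (apply functional_extensionality; exact H). subst; reflexivity. Qed.

Lemma Lw_plus f g : IsP f -> IsP g -> Lw (fun x => f x + g x) = Lw f + Lw g.
Proof.
  intros Hf Hg. unfold Lw at 1, int0inf. apply is_RInt_gen_unique.
  apply gen_ext_eq with (fun x => f x * w x + g x * w x); [intros; ring|].
  apply gen_plus; apply Lw_correct; assumption.
Qed.

Lemma Lw_scal a f : IsP f -> Lw (fun x => a * f x) = a * Lw f.
Proof.
  intros Hf. unfold Lw at 1, int0inf. apply is_RInt_gen_unique.
  apply gen_ext_eq with (fun x => a * (f x * w x)); [intros; ring|].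
  apply gen_scal; apply Lw_correct; assumption.
Qed.

Lemma Lw_minus f g : IsP f -> IsP g -> Lw (fun x => f x - g x) = Lw f - Lw g.
Proof.
  intros Hf Hg. rewrite (Lw_ext _ (fun x => f x + (-1) * g x)) by (intros; ring).
  rewrite Lw_plus, Lw_scal; [ring|assumption|assumption|]. isp. exact Hg.
Qed.

Lemma Lw_zero : Lw (fun _ => 0) = 0.
Proof. unfold Lw, int0inf. apply is_RInt_gen_unique.
  apply gen_ext_eq with (fun _ => 0); [intros; ring|apply gen_zero]. Qed.

Lemma Lw_ibp f c N : (forall x, f x = psum c N x) ->
  Lw (fun x => f x + x * Derive f x) = Lw (fun x => x * f x) - al * Lw f - s * rho * f s.
Proof.
  intros Hf.
  rewrite (Lw_val (fun x => f x + x * Derive f x) (fun k => (INR k + 1) * c k) N).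
  2:{ intros x. rewrite (Derive_IsPoly c N f Hf x), Hf, !psum_fsum, <- fsum_plus.
      apply fsum_ext; intros; ring. }
  rewrite (Lw_val (fun x => x * f x) (fun k => match k with O => 0 | S j => c j end) (S N)).
  2:{ intros x. rewrite Hf, !psum_fsum, fsum_shift. simpl. rewrite Rmult_0_l, Rplus_0_l.
      rewrite <- fsum_scal. apply fsum_ext. intros; ring. }
  rewrite (Lw_val f c N Hf), Hf, fsum_shift, psum_fsum. simpl. rewrite Rmult_0_l, Rplus_0_l.
  unfold rho.
  rewrite <- !fsum_scal, <- !fsum_minus. apply fsum_ext. intros k _.
  rewrite mom_rec by assumption. simpl. ring.
Qed.


Lemma psum_abs_bound c j x : 1 <= x -> Rabs (psum c j x) <= fsum (fun k => Rabs (c k)) j * x ^ (Nat.pred j).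
Proof.
  intros Hx. induction j; simpl.
  - rewrite Rabs_R0; lra.
  - eapply Rle_trans; [apply Rabs_triang|]. rewrite Rabs_mult, <- RPow_abs, (Rabs_pos_eq x) by lra.
    assert (Hp : x ^ Nat.pred j <= x ^ j).
    { destruct j; simpl; [lra|]. pose proof (pow_le x j ltac:(lra)). nra. }
    assert (Hk : x ^ j <= x ^ j) by lra.
    pose proof (Rabs_pos (c j)).
    assert (H0 : 0 <= fsum (fun k => Rabs (c k)) j).
    { clear. induction j; simpl; [lra|]. pose proof (Rabs_pos (c j)). lra. }
    pose proof (pow_le x (Nat.pred j) ltac:(lra)).
    nra.
Qed.

Lemma monic_ge1 c j x : 1 + fsum (fun k => Rabs (c k)) j <= x -> 1 <= x ^ j + psum c j x.
Proof.
  intros Hx.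
  assert (H0 : 0 <= fsum (fun k => Rabs (c k)) j).
  { clear. induction j; simpl; [lra|]. pose proof (Rabs_pos (c j)). lra. }
  assert (Hx1 : 1 <= x) by lra.
  pose proof (psum_abs_bound c j x Hx1) as Hb. pose proof (Rle_abs (- psum c j x)) as Hb2. rewrite Rabs_Ropp in Hb2.
  destruct j as [|j].
  - simpl. lra.
  - simpl Nat.pred in Hb. simpl pow.
    pose proof (pow_le x j ltac:(lra)).
    assert (1 <= x ^ j) by (apply pow_R1_Rle; lra).
    nra.
Qed.

Lemma w_ge0 x : 0 <= w x.
Proof.
  unfold w, weight. apply Rmult_le_pos; [apply Rmult_le_pos; [apply xpow_ge0|left; apply exp_pos]|].
  unfold theta. destruct (Rlt_dec 0 (x - s)); lra.
Qed.

Lemma Lw_monic_pos c j : 0 < Lw (fun x => (x ^ j + psum c j x) ^ 2).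
Proof.
  set (q := fun x => x ^ j + psum c j x).
  set (X0 := 1 + s + fsum (fun k => Rabs (c k)) j).
  assert (HS : 0 <= fsum (fun k => Rabs (c k)) j).
  { clear. induction j; simpl; [lra|]. pose proof (Rabs_pos (c j)). lra. }
  set (f := fun x => q x ^ 2 * w x).
  set (d := B * exp (- (X0 + 1))).
  assert (Hd : 0 < d) by (unfold d; pose proof (exp_pos (- (X0 + 1))); nra).
  assert (Hf0 : forall x, 0 <= f x) by (intros; unfold f; apply Rmult_le_pos; [apply pow2_ge_0|apply w_ge0]).
  assert (Hfd : forall x, X0 <= x <= X0 + 1 -> d <= f x).
  { intros x Hx. unfold f, d, w, weight.
    assert (Hq : 1 <= q x) by (unfold q; apply monic_ge1; unfold X0 in Hx; lra).
    assert (Hxp : 1 <= xpow x al).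
    { rewrite xpow_pos by (unfold X0 in Hx; lra). unfold Rpower. rewrite <- exp_0.
      apply exp_le_mono. assert (0 <= ln x) by (rewrite <- ln_1; apply ln_le; unfold X0 in Hx; lra).
      nra. }
    assert (Hth : theta (x - s) = 1) by (unfold theta; destruct (Rlt_dec 0 (x - s)); [reflexivity|unfold X0 in Hx; lra]).
    rewrite Hth.
    assert (He : exp (- (X0 + 1)) <= exp (- x)) by (apply exp_le_mono; lra).
    pose proof (exp_pos (- x)). pose proof (exp_pos (- (X0 + 1))).
    assert (1 <= q x ^ 2) by nra.
    assert (B <= A + B * 1) by lra.
    assert (exp (- (X0 + 1)) <= xpow x al * exp (- x)) by nra.
    assert (Hu : B * exp (- (X0 + 1)) <= xpow x al * exp (- x) * (A + B * 1)).
    { rewrite Rmult_comm. apply Rmult_le_compat; lra. }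
    set (u := xpow x al * exp (- x) * (A + B * 1)) in *.
    assert (0 <= u) by nra. apply Rle_trans with u; [exact Hu|]. rewrite <- (Rmult_1_l u) at 1. apply Rmult_le_compat_r; lra. }
  assert (Hint : is_RInt_gen f (at_point 0) (Rbar_locally p_infty) (Lw (fun x => q x ^ 2))).
  { apply (Lw_correct (fun x => q x ^ 2)). unfold q. isp.
    all: exists j; apply IsPoly_psum. }
  change (0 < Lw (fun x => q x ^ 2)).
  destruct (Rlt_dec (Lw (fun x => q x ^ 2)) d) as [Hlt|Hge]; [|lra].
  exfalso. set (l := Lw (fun x => q x ^ 2)) in *.
  assert (HP : locally l (fun y => y < d)).
  { exists (mkposreal (d - l) ltac:(lra)). intros y Hy. simpl in Hy.
    unfold ball in Hy; simpl in Hy; unfold AbsRing_ball in Hy; simpl in Hy.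
    unfold abs, minus, plus, opp in Hy; simpl in Hy. apply Rabs_def2 in Hy. lra. }
  destruct (Hint _ HP) as [Q R HQ HR HQR].
  destruct HR as [M HM].
  set (b := Rmax M (X0 + 1) + 1).
  assert (HbM : M < b) by (unfold b; pose proof (Rmax_l M (X0 + 1)); lra).
  assert (HbX : X0 + 1 < b) by (unfold b; pose proof (Rmax_r M (X0 + 1)); lra).
  destruct (HQR 0 b HQ (HM b HbM)) as [y [Hy Hyd]]. simpl in Hy.
  assert (HX0 : 0 <= X0) by (unfold X0; lra).
  assert (He : ex_RInt f 0 b) by (exists y; exact Hy).
  assert (He1 : ex_RInt f 0 X0) by (apply (ex_RInt_Chasles_1 f 0 X0 b); [lra|exact He]).
  assert (He23 : ex_RInt f X0 b) by (apply (ex_RInt_Chasles_2 f 0 X0 b); [lra|exact He]).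
  assert (He2 : ex_RInt f X0 (X0 + 1)) by (apply (ex_RInt_Chasles_1 f X0 (X0 + 1) b); [lra|exact He23]).
  assert (He3 : ex_RInt f (X0 + 1) b) by (apply (ex_RInt_Chasles_2 f X0 (X0 + 1) b); [lra|exact He23]).
  rewrite <- (is_RInt_unique _ _ _ _ Hy) in Hyd.
  rewrite <- (RInt_Chasles f 0 X0 b He1 He23) in Hyd.
  rewrite <- (RInt_Chasles f X0 (X0 + 1) b He2 He3) in Hyd.
  assert (H1 : 0 <= RInt f 0 X0) by (apply RInt_ge_0; [lra|exact He1|intros; apply Hf0]).
  assert (H3 : 0 <= RInt f (X0 + 1) b) by (apply RInt_ge_0; [lra|exact He3|intros; apply Hf0]).
  assert (H2 : RInt (fun _ => d) X0 (X0 + 1) <= RInt f X0 (X0 + 1)).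
  { apply RInt_le; [lra|apply ex_RInt_const|exact He2|]. intros x Hx. apply Hfd. lra. }
  rewrite RInt_const in H2. unfold scal in H2; simpl in H2; unfold mult in H2; simpl in H2.
  unfold plus in Hyd; simpl in Hyd. lra.
Qed.

End LLayer.

Section OPS.
Set Default Proof Using "All".
Variable L : (R -> R) -> R.
Variables al s rho : R.
Hypothesis L_ext : forall f g, (forall x, f x = g x) -> L f = L g.
Hypothesis L_plus : forall f g, IsP f -> IsP g -> L (fun x => f x + g x) = L f + L g.
Hypothesis L_scal : forall a f, IsP f -> L (fun x => a * f x) = a * L f.
Hypothesis L_ibp : forall f, IsP f ->
  L (fun x => f x + x * Derive f x) = L (fun x => x * f x) - al * L f - s * rho * f s.
Variable P : nat -> R -> R.
Hypothesis P_monic : forall n, exists c, forall x, P n x = x ^ n + psum c n x.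
Hypothesis P_orth : forall m n, m <> n -> L (fun x => P m x * P n x) = 0.
Hypothesis h_pos : forall n, 0 < L (fun x => P n x ^ 2).

Definition h n := L (fun x => P n x ^ 2).

Lemma L_zero : L (fun _ => 0) = 0.
Proof.
  rewrite (L_ext _ (fun x => 0 * 1)) by (intros; ring).
  rewrite (L_scal 0 (fun _ => 1)) by isp. ring.
Qed.

Lemma L_minus f g : IsP f -> IsP g -> L (fun x => f x - g x) = L f - L g.
Proof.
  intros Hf Hg. rewrite (L_ext _ (fun x => f x + (-1) * g x)) by (intros; ring).
  rewrite L_plus, L_scal; [ring|assumption|assumption|]. isp. exact Hg.
Qed.

Definition pc (n : nat) : nat -> R := proj1_sig (constructive_indefinite_description _ (P_monic n)).
Lemma pc_spec n x : P n x = x ^ n + psum (pc n) n x.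
Proof. unfold pc. destruct (constructive_indefinite_description _ (P_monic n)) as [c Hc]. apply Hc. Qed.

Lemma IsPoly_P n : IsPoly (S n) (P n).
Proof.
  apply IsPoly_ext with (fun x => x ^ n + psum (pc n) n x); [intros; rewrite pc_spec; reflexivity|].
  apply IsPoly_plus; [apply IsPoly_pow|apply IsPoly_mono with n; [lia|apply IsPoly_psum]].
Qed.

Lemma IsP_P n : IsP (P n).
Proof. exists (S n). apply IsPoly_P. Qed.

Lemma IsP_Pf n : IsP (fun x => P n x).
Proof. apply IsP_P. Qed.

Hint Resolve IsP_P IsP_Pf : isp.

Ltac isp2 := isp; try (apply IsP_Pf); try (apply IsP_P); try assumption.

Lemma orth_low k : forall n c, (k <= n)%nat -> L (fun x => P n x * psum c k x) = 0.
Proof.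
  induction k as [|k IH]; intros n c Hk.
  - simpl. rewrite (L_ext _ (fun _ => 0)) by (intros; ring). apply L_zero.
  - rewrite (L_ext _ (fun x => P n x * psum (fun j => c j - c k * pc k j) k x + c k * (P n x * P k x))).
    2:{ intros x. simpl. rewrite (pc_spec k x), !psum_fsum.
        replace (fsum (fun j => (c j - c k * pc k j) * x ^ j) k) with
          (fsum (fun j => c j * x ^ j) k - c k * fsum (fun j => pc k j * x ^ j) k).
        - ring.
        - rewrite <- fsum_scal, <- fsum_minus. apply fsum_ext. intros; ring. }
    rewrite L_plus, L_scal.
    + rewrite IH by lia. rewrite P_orth by lia. ring.
    + isp2.
    + isp2. exists k; apply IsPoly_psum.
    + isp2.
Qed.

Lemma orth_lowP k n q : (k <= n)%nat -> IsPoly k q -> L (fun x => P n x * q x) = 0.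
Proof.
  intros Hk [c Hc]. rewrite (L_ext _ (fun x => P n x * psum c k x)) by (intros; rewrite Hc; reflexivity).
  apply orth_low; exact Hk.
Qed.

Lemma monic_L m g d : (forall x, g x = x ^ m + psum d m x) -> L (fun x => P m x * g x) = h m.
Proof.
  intros Hg.
  rewrite (L_ext _ (fun x => P m x ^ 2 + P m x * (g x - P m x))) by (intros; simpl; ring).
  rewrite L_plus.
  - rewrite (orth_lowP m m); [unfold h; ring|lia|].
    exists (fun j => d j - pc m j). intros x. rewrite Hg, (pc_spec m x), !psum_fsum.
    transitivity (fsum (fun k => d k * x ^ k - pc m k * x ^ k) m);
      [rewrite fsum_minus; ring|apply fsum_ext; intros; ring].
  - isp2.
  - isp2. apply IsP_ext with (fun x => x ^ m + psum d m x); [intros; rewrite Hg; reflexivity|]. isp. exists m; apply IsPoly_psum.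
Qed.

Lemma expansion N : forall q, IsPoly N q ->
  forall x, q x = fsum (fun k => L (fun y => q y * P k y) / h k * P k x) N.
Proof.
  induction N as [|N IH]; intros q [c Hc] x.
  - simpl. rewrite Hc. reflexivity.
  - set (q' := fun y => q y - c N * P N y).
    assert (Hq' : IsPoly N q').
    { exists (fun j => c j - c N * pc N j). intros y. unfold q'. rewrite Hc, (pc_spec N y). simpl.
      rewrite !psum_fsum.
      transitivity (fsum (fun k => c k * y ^ k - c N * (pc N k * y ^ k)) N);
        [rewrite fsum_minus, fsum_scal; ring|apply fsum_ext; intros; ring]. }
    assert (Hqq : forall y, q y = q' y + c N * P N y) by (intros; unfold q'; ring).
    assert (HqP : IsP q) by (exists (S N); exists c; exact Hc).
    assert (Hq'P : IsP q') by (exists N; exact Hq').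
    assert (Hs : fsum (fun k => L (fun y => q y * P k y) / h k * P k x) N =
                 fsum (fun k => L (fun y => q' y * P k y) / h k * P k x) N).
    { apply fsum_ext. intros k Hk. f_equal. f_equal.
      rewrite (L_ext _ (fun y => q' y * P k y + c N * (P N y * P k y))) by (intros; rewrite Hqq; ring).
      rewrite L_plus, L_scal, P_orth by (try lia; isp2; try assumption). ring. }
    simpl. rewrite Hs. rewrite <- IH by exact Hq'.
    rewrite (L_ext _ (fun y => P N y * q' y + c N * P N y ^ 2)) by (intros; rewrite Hqq; simpl; ring).
    rewrite L_plus, L_scal, (orth_lowP N N q'); [|lia|exact Hq'|isp2|isp2|isp2].
    unfold h. rewrite Hqq. field. apply Rgt_not_eq, h_pos. all: try assumption.
Qed.


Lemma h_nz n : h n <> 0.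
Proof. apply Rgt_not_eq, h_pos. Qed.

Definition alc n := L (fun x => x * P n x ^ 2) / h n.
Definition be n := h n / h (n - 1).

Lemma xP_monic n x : x * P n x = x ^ (S n) + psum (shiftc (pc n)) (S n) x.
Proof. rewrite (pc_spec n x), Rmult_plus_distr_l, psum_mulx. simpl. ring. Qed.

Lemma rc_top n : L (fun y => y * P n y * P (S n) y) = h (S n).
Proof.
  rewrite (L_ext _ (fun y => P (S n) y * (y * P n y))) by (intros; ring).
  apply monic_L with (shiftc (pc n)). apply xP_monic.
Qed.

Lemma rc_mid n : L (fun y => y * P n y * P n y) = alc n * h n.
Proof.
  unfold alc. rewrite (L_ext _ (fun x => x * P n x ^ 2)) by (intros; simpl; ring).
  field. apply h_nz.
Qed.

Lemma rc_low n : L (fun y => y * P (S n) y * P n y) = h (S n).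
Proof.
  rewrite (L_ext _ (fun y => P (S n) y * (y * P n y))) by (intros; ring).
  apply monic_L with (shiftc (pc n)). apply xP_monic.
Qed.

Lemma IsPoly_xP k : IsPoly (S (S k)) (fun y => y * P k y).
Proof. apply IsPoly_mulx. apply IsPoly_P. Qed.

Lemma rc_zero n k : (S (S k) <= n)%nat -> L (fun y => y * P n y * P k y) = 0.
Proof.
  intros Hk. rewrite (L_ext _ (fun y => P n y * (y * P k y))) by (intros; ring).
  apply orth_lowP with (S (S k)); [exact Hk|apply IsPoly_xP].
Qed.

Lemma rec_gen n x : x * P n x = fsum (fun k => L (fun y => y * P n y * P k y) / h k * P k x) (S (S n)).
Proof. apply (expansion (S (S n)) (fun y => y * P n y)). apply IsPoly_xP. Qed.

Lemma rec0 x : x * P 0 x = P 1 x + alc 0 * P 0 x.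
Proof.
  rewrite rec_gen. simpl. rewrite rc_top, rc_mid.
  field. split; apply h_nz.
Qed.

Lemma recS n x : x * P (S n) x = P (S (S n)) x + alc (S n) * P (S n) x + be (S n) * P n x.
Proof.
  rewrite rec_gen. simpl fsum.
  rewrite (fsum_ext _ (fun _ => 0)).
  - rewrite fsum_zero. rewrite rc_top, rc_mid, rc_low. unfold be. simpl. rewrite Nat.sub_0_r.
    field. repeat split; apply h_nz.
  - intros k Hk. rewrite rc_zero by lia. unfold Rdiv. ring.
Qed.


Definition Cf m j := if (j <? m)%nat then pc m j else 1.

Lemma P_Cf m x : P m x = psum (Cf m) (S m) x.
Proof.
  rewrite psum_top. unfold Cf at 2. rewrite Nat.ltb_irrefl.
  rewrite (pc_spec m x). rewrite (psum_ext (Cf m) (pc m)). ring.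
  intros k Hk. unfold Cf. apply Nat.ltb_lt in Hk. rewrite Hk. reflexivity.
Qed.

Definition XdP m := fun x => x * Derive (P m) x.

Lemma XdP_decomp m x : XdP m x = INR m * P m x + psum (fun j => (INR j - INR m) * pc m j) m x.
Proof.
  unfold XdP. rewrite (Derive_IsPoly (Cf m) (S m) (P m) (P_Cf m) x).
  rewrite psum_top. unfold Cf at 2. rewrite Nat.ltb_irrefl.
  rewrite (psum_ext (fun k => INR k * Cf m k) (fun k => INR k * pc m k)).
  2:{ intros k Hk. unfold Cf. apply Nat.ltb_lt in Hk. rewrite Hk. reflexivity. }
  rewrite (pc_spec m x), !psum_fsum.
  replace (fsum (fun k => (INR k - INR m) * pc m k * x ^ k) m) with
    (fsum (fun k => INR k * pc m k * x ^ k) m - INR m * fsum (fun k => pc m k * x ^ k) m).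
  - ring.
  - rewrite <- fsum_scal, <- fsum_minus. apply fsum_ext; intros; ring.
Qed.

Lemma IsPoly_XdP m : IsPoly (S m) (XdP m).
Proof.
  apply IsPoly_ext with (fun x => INR m * P m x + psum (fun j => (INR j - INR m) * pc m j) m x).
  { intros; rewrite XdP_decomp; reflexivity. }
  apply IsPoly_plus; [apply IsPoly_scal, IsPoly_P|apply IsPoly_mono with m; [lia|apply IsPoly_psum]].
Qed.

Lemma IsP_XdP m : IsP (XdP m).
Proof. exists (S m); apply IsPoly_XdP. Qed.

Lemma IsP_XdPf m : IsP (fun x => XdP m x).
Proof. apply IsP_XdP. Qed.

Lemma IsP_psumf c N : IsP (fun x => psum c N x).
Proof. exists N; apply IsPoly_psum. Qed.

Ltac isp3 := isp; try (apply IsP_Pf); try (apply IsP_P); try (apply IsP_XdPf); try (apply IsP_psumf); try assumption.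

Lemma ibpPP m k :
  L (fun x => P m x * P k x) + L (fun x => XdP m x * P k x) + L (fun x => P m x * XdP k x)
  = L (fun x => x * P m x * P k x) - al * L (fun x => P m x * P k x) - s * rho * P m s * P k s.
Proof.
  pose proof (L_ibp (fun x => P m x * P k x) ltac:(isp3)) as H. cbv beta in H.
  rewrite (L_ext (fun x => P m x * P k x + x * Derive (fun x0 => P m x0 * P k x0) x)
                 (fun x => (P m x * P k x + XdP m x * P k x) + P m x * XdP k x)) in H.
  2:{ intros x. rewrite Derive_mult by (apply IsP_exd; apply IsP_P). unfold XdP. ring. }
  rewrite !L_plus in H by isp3.
  rewrite (L_ext (fun x => x * (P m x * P k x)) (fun x => x * P m x * P k x)) in H by (intros; ring).
  rewrite H by isp3. ring.
Qed.

Lemma L_XdP_low m k : (S k <= m)%nat -> L (fun x => P m x * XdP k x) = 0.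
Proof. intros Hk. apply orth_lowP with (S k); [exact Hk|apply IsPoly_XdP]. Qed.

Lemma L_XdP_self m : L (fun x => XdP m x * P m x) = INR m * h m.
Proof.
  rewrite (L_ext _ (fun x => INR m * P m x ^ 2 + P m x * psum (fun j => (INR j - INR m) * pc m j) m x)).
  2:{ intros x. rewrite XdP_decomp. simpl. ring. }
  rewrite L_plus, L_scal by isp3. rewrite (orth_low m m) by lia. unfold h; ring.
Qed.

Definition Rr n := rho * P n s ^ 2 / h n.
Definition rr n := rho * P n s * P (n - 1) s / h (n - 1).

Lemma alc_formula n : alc n = 2 * INR n + 1 + al + s * Rr n.
Proof.
  pose proof (ibpPP n n) as H.
  rewrite (L_ext (fun x => P n x * XdP n x) (fun x => XdP n x * P n x)) in H by (intros; ring).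
  rewrite L_XdP_self in H. rewrite rc_mid in H.
  rewrite (L_ext (fun x => P n x * P n x) (fun x => P n x ^ 2)) in H by (intros; simpl; ring).
  fold (h n) in H. unfold Rr.
  pose proof (h_nz n).
  apply Rmult_eq_reg_r with (h n); [|exact H0].
  replace ((2 * INR n + 1 + al + s * (rho * P n s ^ 2 / h n)) * h n) with
    (h n + INR n * h n + INR n * h n + al * h n + s * rho * P n s * P n s) by (simpl; field; exact H0).
  lra.
Qed.

Lemma XdP_prev n : L (fun x => XdP (S n) x * P n x) = h (S n) - s * rho * P (S n) s * P n s.
Proof.
  pose proof (ibpPP (S n) n) as H.
  rewrite P_orth in H by lia. rewrite L_XdP_low in H by lia. rewrite rc_low in H. lra.
Qed.

Lemma XdP_low n k : (S k < n)%nat -> L (fun x => XdP n x * P k x) = - (s * rho * P n s * P k s).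
Proof.
  intros Hk. pose proof (ibpPP n k) as H.
  rewrite P_orth in H by lia. rewrite L_XdP_low in H by lia. rewrite rc_zero in H by lia. lra.
Qed.


Definition K n x y := fsum (fun k => P k x * P k y / h k) n.

Lemma P0_one x : P 0 x = 1.
Proof. rewrite pc_spec. simpl. ring. Qed.

Lemma P1_val x : P 1 x = x - alc 0.
Proof. pose proof (rec0 x) as H. rewrite P0_one in H. lra. Qed.

Lemma CD n x y : (x - y) * K (S n) x y = (P (S n) x * P n y - P n x * P (S n) y) / h n.
Proof.
  induction n as [|n IH].
  - unfold K. simpl. rewrite !P0_one, !P1_val. field. apply h_nz.
  - unfold K in *. simpl fsum in *. rewrite Rmult_plus_distr_l.
    simpl fsum in IH. rewrite IH.
    replace ((x - y) * (P (S n) x * P (S n) y / h (S n))) with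
      ((x * P (S n) x) * P (S n) y / h (S n) - P (S n) x * (y * P (S n) y) / h (S n))
      by (field; apply h_nz).
    rewrite (recS n x), (recS n y). unfold be. simpl. rewrite Nat.sub_0_r.
    field. split; apply h_nz.
Qed.

Lemma XdP_zero m : XdP m 0 = 0.
Proof. unfold XdP. ring. Qed.

Lemma eq1_raw m : 0 = INR (S m) * P (S m) 0 + be (S m) * P m 0 - s * rho * P (S m) s * K (S m) 0 s.
Proof.
  rewrite <- (XdP_zero (S m)) at 1.
  rewrite (expansion (S (S m)) (XdP (S m)) (IsPoly_XdP (S m)) 0).
  simpl fsum. unfold K. simpl fsum.
  rewrite L_XdP_self, XdP_prev.
  rewrite (fsum_ext _ (fun k => - (s * rho * P (S m) s) * (P k 0 * P k s / h k))).
  2:{ intros k Hk. rewrite XdP_low by lia. field. apply h_nz. }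
  rewrite fsum_scal. unfold be. simpl. rewrite Nat.sub_0_r.
  field. split; apply h_nz.
Qed.

Lemma eq1 m : (INR (S m) + rr (S m)) * P (S m) 0 = be (S m) * (Rr (S m) - 1) * P m 0.
Proof.
  pose proof (eq1_raw m) as E. pose proof (CD m 0 s) as C.
  assert (HK : s * K (S m) 0 s = - ((P (S m) 0 * P m s - P m 0 * P (S m) s) / h m)) by lra.
  replace (s * rho * P (S m) s * K (S m) 0 s) with (rho * P (S m) s * (s * K (S m) 0 s)) in E by ring.
  rewrite HK in E. unfold rr, Rr, be in *. simpl in *. rewrite Nat.sub_0_r in *.
  pose proof (h_nz m). pose proof (h_nz (S m)).
  apply Rminus_diag_uniq. match type of E with 0 = ?r => transitivity r; [field; split; assumption|symmetry; exact E] end.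
Qed.

Definition e n := match n with O => 0 | S m => pc (S m) m end.

Lemma psum_zero_c N x : psum (fun _ => 0) N x = 0.
Proof. induction N; simpl; [ring|rewrite IHN; ring]. Qed.

Lemma L_Pxn n : L (fun x => P n x * x ^ n) = h n.
Proof. apply monic_L with (fun _ => 0). intros x. rewrite psum_zero_c. ring. Qed.

Lemma pc_top n x : P (S n) x = x ^ (S n) + psum (pc (S n)) n x + e (S n) * x ^ n.
Proof. rewrite pc_spec, psum_top. simpl e. ring. Qed.

Lemma L_Pxsn n : L (fun x => P n x * x ^ (S n)) = - e (S n) * h n.
Proof.
  rewrite (L_ext _ (fun x => P n x * P (S n) x + (- e (S n)) * (P n x * x ^ n) + (-1) * (P n x * psum (pc (S n)) n x))).
  2:{ intros x. rewrite (pc_top n x). ring. }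
  rewrite !L_plus, !L_scal by isp3.
  rewrite P_orth by lia. rewrite L_Pxn. rewrite orth_low by lia. ring.
Qed.

Lemma alc_e n : alc n = e n - e (S n).
Proof.
  pose proof (h_nz n) as Hn.
  assert (alc n * h n = (e n - e (S n)) * h n).
  { rewrite <- rc_mid.
    destruct n as [|m].
    - rewrite (L_ext _ (fun x => P 0 x * x ^ 1)) by (intros; rewrite P0_one; simpl; ring).
      rewrite L_Pxsn. simpl e. ring.
    - rewrite (L_ext _ (fun x => P (S m) x * x ^ (S (S m)) + e (S m) * (P (S m) x * x ^ (S m))
                               + P (S m) x * (x * psum (pc (S m)) m x))).
      2:{ intros x. rewrite (pc_top m x). simpl. ring. }
      rewrite !L_plus, !L_scal by isp3.
      rewrite L_Pxsn, L_Pxn.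
      rewrite (orth_lowP (S m) (S m) (fun x => x * psum (pc (S m)) m x)); [ring|lia|].
      apply IsPoly_mulx, IsPoly_psum. }
  apply Rmult_eq_reg_r with (h n); assumption.
Qed.

Lemma gamma_e m : L (fun x => XdP (S m) x * P m x) = - e (S m) * h m.
Proof.
  rewrite (L_ext _ (fun x => INR (S m) * (P (S m) x * P m x) + P m x * psum (fun j => (INR j - INR (S m)) * pc (S m) j) m x
                             + (INR m - INR (S m)) * e (S m) * (P m x * x ^ m))).
  2:{ intros x. rewrite XdP_decomp, psum_top. simpl e. ring. }
  rewrite !L_plus, !L_scal by isp3.
  rewrite P_orth by lia. rewrite orth_low by lia. rewrite L_Pxn. rewrite S_INR. ring.
Qed.

Lemma e_sum n : e n = - fsum alc n.
Proof.
  induction n as [|n IH]; [simpl; ring|]. simpl fsum. rewrite alc_e.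
  rewrite IH. ring.
Qed.

Lemma T1 m : be (S m) = s * rr (S m) + fsum alc (S m).
Proof.
  pose proof (XdP_prev m) as H. rewrite gamma_e in H.
  rewrite <- (Ropp_involutive (fsum alc (S m))), <- e_sum.
  unfold be, rr. simpl. rewrite Nat.sub_0_r.
  pose proof (h_nz m).
  replace (h (S m)) with (- e (S m) * h m + s * rho * P (S m) s * P m s) by lra.
  simpl e. field. assumption.
Qed.

Lemma eq2 m : (INR (S m) + rr (S m) + al) * P m 0 = (Rr m - 1) * P (S m) 0.
Proof.
  destruct m as [|p].
  - rewrite P0_one, !P1_val. pose proof (alc_formula 0) as Ha.
    unfold rr, Rr in *. simpl in *. rewrite P0_one, P1_val in *.
    pose proof (h_nz 0). rewrite Ha. field. assumption.
  - pose proof (eq1 p) as E1. pose proof (recS p 0) as E2. pose proof (recS p s) as E3.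
    pose proof (alc_formula (S p)) as E4.
    assert (E3' : s * Rr (S p) = rr (S (S p)) + alc (S p) * Rr (S p) + rr (S p)).
    { unfold Rr, rr. replace (S (S p) - 1)%nat with (S p) by lia. replace (S p - 1)%nat with p by lia.
      pose proof (h_nz p). pose proof (h_nz (S p)).
      transitivity ((s * P (S p) s) * (rho * P (S p) s / h (S p))); [field; assumption|].
      rewrite E3. unfold be. replace (S p - 1)%nat with p by lia. field. split; assumption. }
    rewrite Rmult_0_l in E2.
    assert (Ebc : be (S p) * P p 0 = - P (S (S p)) 0 - alc (S p) * P (S p) 0) by lra.
    replace (be (S p) * (Rr (S p) - 1) * P p 0) with ((Rr (S p) - 1) * (be (S p) * P p 0)) in E1 by ring.
    rewrite Ebc in E1.
    assert (Err : rr (S (S p)) = s * Rr (S p) - alc (S p) * Rr (S p) - rr (S p)) by lra.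
    rewrite Err. rewrite E4 in *. rewrite !S_INR in *. lra.
Qed.

Lemma be_nz m : be (S m) <> 0.
Proof. unfold be. simpl. rewrite Nat.sub_0_r. pose proof (h_pos m). pose proof (h_pos (S m)).
  apply Rgt_not_eq. unfold h. apply Rdiv_lt_0_compat; assumption. Qed.

Lemma nonvan n : P n 0 <> 0 \/ P (S n) 0 <> 0.
Proof.
  induction n as [|n IH].
  - left. rewrite P0_one. lra.
  - destruct (Req_dec (P (S n) 0) 0) as [Ha|Ha]; [|left; exact Ha].
    right. intros Hb. pose proof (recS n 0) as E. rewrite Ha, Hb in E.
    assert (be (S n) * P n 0 = 0) by lra.
    apply Rmult_integral in H. destruct H as [H|H]; [apply (be_nz n H)|].
    destruct IH as [IH|IH]; contradiction.
Qed.

Lemma key m : (INR (S m) + rr (S m)) * (INR (S m) + rr (S m) + al) = be (S m) * (1 - Rr (S m)) * (1 - Rr m).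
Proof.
  pose proof (eq1 m) as E1. pose proof (eq2 m) as E2.
  destruct (Req_dec (P (S m) 0) 0) as [Ha|Ha].
  - destruct (nonvan m) as [Hb|Hb]; [|contradiction].
    rewrite Ha in E1, E2. rewrite Rmult_0_r in E1, E2.
    assert (HR : Rr (S m) - 1 = 0).
    { symmetry in E1. apply Rmult_integral in E1. destruct E1 as [E|E]; [|contradiction].
      apply Rmult_integral in E. destruct E as [E|E]; [exfalso; apply (be_nz m E)|exact E]. }
    assert (HN : INR (S m) + rr (S m) + al = 0).
    { apply Rmult_integral in E2. destruct E2 as [E|E]; [exact E|contradiction]. }
    rewrite HN. replace (1 - Rr (S m)) with 0 by lra. ring.
  - apply Rmult_eq_reg_r with (P (S m) 0); [|exact Ha].
    replace ((INR (S m) + rr (S m)) * (INR (S m) + rr (S m) + al) * P (S m) 0) with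
      ((INR (S m) + rr (S m) + al) * ((INR (S m) + rr (S m)) * P (S m) 0)) by ring.
    rewrite E1.
    replace ((INR (S m) + rr (S m) + al) * (be (S m) * (Rr (S m) - 1) * P m 0)) with
      (be (S m) * (Rr (S m) - 1) * ((INR (S m) + rr (S m) + al) * P m 0)) by ring.
    rewrite E2. ring.
Qed.

Lemma T2 m : rr (S m) ^ 2 = be (S m) * Rr (S m) * Rr m.
Proof.
  unfold rr, be, Rr. simpl. rewrite Nat.sub_0_r. pose proof (h_nz m). pose proof (h_nz (S m)).
  field. split; assumption.
Qed.

Lemma T3 m : INR (S m) * (INR (S m) + al) + (2 * INR (S m) + al) * rr (S m)
             = be (S m) * (1 - Rr (S m) - Rr m).
Proof.
  pose proof (key m) as K1. pose proof (T2 m) as K2.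
  simpl in K2.
  replace (be (S m) * (1 - Rr (S m) - Rr m)) with
    (be (S m) * (1 - Rr (S m)) * (1 - Rr m) - be (S m) * Rr (S m) * Rr m) by ring.
  rewrite <- K1, <- K2. ring.
Qed.

Lemma alc_sum N : fsum alc N = INR N * (INR N + al) + s * fsum Rr N.
Proof.
  induction N as [|N IH]; simpl fsum; [simpl; ring|].
  rewrite IH, alc_formula, S_INR. ring.
Qed.

End OPS.
Unset Default Proof Using.

Section Inst.
Variables al A B : R.
Hypothesis Hal : 0 < al.
Hypothesis HA : 0 <= A.
Hypothesis HB : 0 < B.
Variable P : nat -> R -> R -> R.
Hypothesis HP : monic_OPS al A B P.

Definition Lu (u : R) := Lw al A B u.
Definition Pu (u : R) := fun n x => P n x u.
Definition rhou (u : R) := rho al B u.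

Lemma I_ext u : forall f g, (forall x, f x = g x) -> Lu u f = Lu u g.
Proof. intros; apply Lw_ext; assumption. Qed.

Lemma I_plus u : 0 < u -> forall f g, IsP f -> IsP g -> Lu u (fun x => f x + g x) = Lu u f + Lu u g.
Proof. intros; apply Lw_plus; assumption. Qed.

Lemma I_scal u : 0 < u -> forall a f, IsP f -> Lu u (fun x => a * f x) = a * Lu u f.
Proof. intros; apply Lw_scal; assumption. Qed.

Lemma I_ibp u : 0 < u -> forall f, IsP f ->
  Lu u (fun x => f x + x * Derive f x) = Lu u (fun x => x * f x) - al * Lu u f - u * rhou u * f u.
Proof. intros Hu f [N [c Hc]]. apply (Lw_ibp al A B u Hal Hu f c N Hc). Qed.

Lemma I_monic u : 0 < u -> forall n, exists c, forall x, Pu u n x = x ^ n + psum c n x.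
Proof. intros Hu n. destruct (HP u Hu) as [H1 _]. apply H1. Qed.

Lemma I_orth u : 0 < u -> forall m n, m <> n -> Lu u (fun x => Pu u m x * Pu u n x) = 0.
Proof.
  intros Hu m n Hmn. destruct (HP u Hu) as [_ H2].
  unfold Lu, Lw, int0inf. apply is_RInt_gen_unique. apply (H2 m n Hmn).
Qed.

Lemma I_hpos u : 0 < u -> forall n, 0 < Lu u (fun x => Pu u n x ^ 2).
Proof.
  intros Hu n. destruct (I_monic u Hu n) as [c Hc].
  rewrite (I_ext u _ (fun x => (x ^ n + psum c n x) ^ 2)) by (intros; rewrite Hc; reflexivity).
  apply Lw_monic_pos; assumption.
Qed.

End Inst.


Lemma Lw_pow al A B u k : 0 < al -> 0 < u -> Lw al A B u (fun x => x ^ k) = mom al A B k u.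
Proof. intros Hal Hu. unfold Lw, int0inf. apply is_RInt_gen_unique. apply mom_int; assumption. Qed.

Lemma Lw_prod al A B u c N d M : 0 < al -> 0 <= A -> 0 < B -> 0 < u ->
  Lw al A B u (fun x => psum c N x * psum d M x) =
  fsum (fun k => fsum (fun l => c k * d l * mom al A B (k + l) u) M) N.
Proof.
  intros Hal HA HB Hu.
  assert (Hpm : forall k, Lw al A B u (fun x => x ^ k * psum d M x) = fsum (fun l => d l * mom al A B (k + l) u) M).
  { intros k. induction M as [|M IH]; simpl.
    - rewrite (Lw_ext _ _ _ _ _ (fun _ => 0)) by (intros; ring). apply Lw_zero; assumption.
    - rewrite (Lw_ext _ _ _ _ _ (fun x => x ^ k * psum d M x + d M * x ^ (k + M))).
      2:{ intros x. rewrite pow_add. ring. }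
      rewrite Lw_plus, Lw_scal by (try assumption; isp; exists M; apply IsPoly_psum).
      rewrite IH, Lw_pow by assumption. ring. }
  induction N as [|N IH]; simpl.
  - rewrite (Lw_ext _ _ _ _ _ (fun _ => 0)) by (intros; ring). apply Lw_zero; assumption.
  - rewrite (Lw_ext _ _ _ _ _ (fun x => psum c N x * psum d M x + c N * (x ^ N * psum d M x))).
    2:{ intros x. ring. }
    rewrite Lw_plus, Lw_scal by (try assumption; isp; first [exists N; apply IsPoly_psum|exists M; apply IsPoly_psum]).
    rewrite IH, Hpm, <- fsum_scal. f_equal. apply fsum_ext. intros; ring.
Qed.

Lemma is_derive_fsum (g g' : nat -> R -> R) N u :
  (forall k, is_derive (g k) u (g' k u)) ->
  is_derive (fun v => fsum (fun k => g k v) N) u (fsum (fun k => g' k u) N).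
Proof.
  intros H. induction N as [|N IH]; simpl.
  - apply is_derive_Reals, derivable_pt_lim_const.
  - apply is_derive_Reals. apply derivable_pt_lim_plus; apply is_derive_Reals; [exact IH|apply H].
Qed.

Lemma is_derive_mult3 (f g k : R -> R) u df dg dk :
  is_derive f u df -> is_derive g u dg -> is_derive k u dk ->
  is_derive (fun v => f v * g v * k v) u (df * g u * k u + f u * dg * k u + f u * g u * dk).
Proof.
  intros Hf Hg Hk. apply is_derive_Reals.
  replace (df * g u * k u + f u * dg * k u + f u * g u * dk) with
    ((df * g u + f u * dg) * k u + (f u * g u) * dk) by ring.
  apply (derivable_pt_lim_mult (fun v => f v * g v) k).
  - apply derivable_pt_lim_mult; apply is_derive_Reals; assumption.
  - apply is_derive_Reals; assumption.
Qed.

Lemma fsum_prod (a b : nat -> R) N M : fsum (fun k => fsum (fun l => a k * b l) M) N = fsum a N * fsum b M.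
Proof.
  induction N as [|N IH]; simpl; [ring|]. rewrite IH. rewrite fsum_scal. ring.
Qed.

Lemma bil_deriv al A B (C D : nat -> R -> R) (C' D' : nat -> R) N M u :
  0 < al -> 0 <= A -> 0 < B -> 0 < u ->
  (forall k, is_derive (C k) u (C' k)) -> (forall k, is_derive (D k) u (D' k)) ->
  is_derive (fun v => fsum (fun k => fsum (fun l => C k v * D l v * mom al A B (k + l) v) M) N) u
    (Lw al A B u (fun x => psum C' N x * psum (fun l => D l u) M x)
     + Lw al A B u (fun x => psum (fun k => C k u) N x * psum D' M x)
     - rho al B u * psum (fun k => C k u) N u * psum (fun l => D l u) M u).
Proof.
  intros Hal HA HB Hu HC HD.
  set (V1 := fsum (fun k => fsum (fun l => C' k * D l u * mom al A B (k + l) u + C k u * D' l * mom al A B (k + l) u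
           + C k u * D l u * (- (B * u ^ (k + l) * xpow u al * exp (- u)))) M) N).
  assert (H : is_derive (fun v => fsum (fun k => fsum (fun l => C k v * D l v * mom al A B (k + l) v) M) N) u V1).
  { apply (is_derive_fsum (fun k v => fsum (fun l => C k v * D l v * mom al A B (k + l) v) M)
      (fun k u0 => fsum (fun l => C' k * D l u0 * mom al A B (k + l) u0 + C k u0 * D' l * mom al A B (k + l) u0
           + C k u0 * D l u0 * (- (B * u0 ^ (k + l) * xpow u0 al * exp (- u0)))) M)).
    intros k.
    apply (is_derive_fsum (fun l v => C k v * D l v * mom al A B (k + l) v)
      (fun l u0 => C' k * D l u0 * mom al A B (k + l) u0 + C k u0 * D' l * mom al A B (k + l) u0
           + C k u0 * D l u0 * (- (B * u0 ^ (k + l) * xpow u0 al * exp (- u0))))).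
    intros l. apply is_derive_mult3; [apply HC|apply HD|apply mom_deriv; assumption]. }
  enough (E : V1 = Lw al A B u (fun x => psum C' N x * psum (fun l => D l u) M x)
     + Lw al A B u (fun x => psum (fun k => C k u) N x * psum D' M x)
     - rho al B u * psum (fun k => C k u) N u * psum (fun l => D l u) M u) by (rewrite <- E; exact H).
  rewrite !Lw_prod by assumption. rewrite !psum_fsum. unfold rho, V1.
  rewrite Rmult_assoc, <- fsum_prod, <- !fsum_scal, <- fsum_plus, <- fsum_minus.
  apply fsum_ext. intros k _.
  rewrite <- !fsum_scal, <- fsum_plus, <- fsum_minus. apply fsum_ext. intros l _.
  rewrite pow_add. ring.
Qed.

Lemma exd_plus (f g : R -> R) x : ex_derive f x -> ex_derive g x -> ex_derive (fun y => f y + g y) x.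
Proof. intros [l1 H1] [l2 H2]. exists (l1 + l2). apply is_derive_Reals.
  apply derivable_pt_lim_plus; apply is_derive_Reals; assumption. Qed.
Lemma exd_minus (f g : R -> R) x : ex_derive f x -> ex_derive g x -> ex_derive (fun y => f y - g y) x.
Proof. intros [l1 H1] [l2 H2]. exists (l1 - l2). apply is_derive_Reals.
  apply derivable_pt_lim_minus; apply is_derive_Reals; assumption. Qed.
Lemma exd_mult (f g : R -> R) x : ex_derive f x -> ex_derive g x -> ex_derive (fun y => f y * g y) x.
Proof. intros [l1 H1] [l2 H2]. exists (l1 * g x + f x * l2). apply is_derive_Reals.
  apply derivable_pt_lim_mult; apply is_derive_Reals; assumption. Qed.
Lemma exd_const (a : R) x : ex_derive (fun _ : R => a) x.
Proof. exists 0. apply is_derive_Reals, derivable_pt_lim_const. Qed.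
Lemma exd_div (f g : R -> R) x : ex_derive f x -> ex_derive g x -> g x <> 0 -> ex_derive (fun y => f y / g y) x.
Proof. intros [l1 H1] [l2 H2] Hg. eexists. apply is_derive_Reals.
  apply derivable_pt_lim_div; try apply is_derive_Reals; eassumption. Qed.

Lemma locally_pos u : 0 < u -> locally u (fun v => 0 < v).
Proof.
  intros Hu. exists (mkposreal u Hu). intros y Hy.
  unfold ball in Hy; simpl in Hy; unfold AbsRing_ball in Hy; simpl in Hy.
  unfold abs, minus, plus, opp in Hy; simpl in Hy. apply Rabs_def2 in Hy. lra.
Qed.

Lemma exd_ext_loc (f g : R -> R) u : 0 < u -> (forall v, 0 < v -> f v = g v) -> ex_derive f u -> ex_derive g u.
Proof.
  intros Hu H [l Hl]. exists l. apply is_derive_ext_loc with f; [|exact Hl].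
  generalize (locally_pos u Hu). apply filter_imp. intros v Hv. apply H; exact Hv.
Qed.

Section Smooth.
Variables al A B : R.
Hypothesis Hal : 0 < al.
Hypothesis HA : 0 <= A.
Hypothesis HB : 0 < B.
Variable P : nat -> R -> R -> R.
Hypothesis HP : monic_OPS al A B P.

Ltac oi u Hu := first [exact (I_ext al A B u) | exact (I_plus al A B Hal u Hu)
  | exact (I_scal al A B Hal u Hu) | exact (I_ibp al A B Hal u Hu) | exact (I_monic al A B P HP u Hu)
  | exact (I_orth al A B P HP u Hu) | exact (I_hpos al A B Hal HA HB P HP u Hu)].

Ltac ops lem u Hu H := pose proof (lem (Lu al A B u) al u (rhou al B u) (I_ext al A B u)
  (I_plus al A B Hal u Hu) (I_scal al A B Hal u Hu) (I_ibp al A B Hal u Hu) (Pu P u)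
  (I_monic al A B P HP u Hu) (I_orth al A B P HP u Hu) (I_hpos al A B Hal HA HB P HP u Hu)) as H.

Definition SRep j := exists c : nat -> R -> R, (forall k u, 0 < u -> ex_derive (c k) u) /\
  (forall u x, 0 < u -> P j x u = x ^ j + psum (fun k => c k u) j x).

Definition Cfl (c : nat -> R -> R) j k u := if (k <? j)%nat then c k u else 1.

Lemma Cfl_rep c j u x : x ^ j + psum (fun k => c k u) j x = psum (fun k => Cfl c j k u) (S j) x.
Proof.
  rewrite psum_top. unfold Cfl at 2. rewrite Nat.ltb_irrefl.
  rewrite (psum_ext (fun k => c k u) (fun k => Cfl c j k u)). ring.
  intros k Hk. unfold Cfl. apply Nat.ltb_lt in Hk. rewrite Hk. reflexivity.
Qed.

Lemma Cfl_exd c j k u : (forall k u, 0 < u -> ex_derive (c k) u) -> 0 < u -> ex_derive (Cfl c j k) u.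
Proof.
  intros Hc Hu. unfold Cfl. destruct (k <? j)%nat; [apply Hc; exact Hu|apply exd_const].
Qed.

Definition Sh (c : nat -> R -> R) k v := shiftc (fun i => c i v) k.

Definition hv j u := Lw al A B u (fun x => P j x u ^ 2).
Definition alv j u := Lw al A B u (fun x => x * P j x u ^ 2) / hv j u.

Lemma hv_pos j u : 0 < u -> 0 < hv j u.
Proof. intros Hu. apply (I_hpos al A B Hal HA HB P HP u Hu j). Qed.

Lemma hv_double c j u : 0 < u -> (forall u x, 0 < u -> P j x u = x ^ j + psum (fun k => c k u) j x) ->
  hv j u = fsum (fun k => fsum (fun l => Cfl c j k u * Cfl c j l u * mom al A B (k + l) u) (S j)) (S j).
Proof.
  intros Hu Hc. unfold hv. rewrite <- Lw_prod by assumption. apply Lw_ext. intros x.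
  rewrite Hc by exact Hu. rewrite Cfl_rep. simpl. ring.
Qed.

Lemma hv_exd j u : SRep j -> 0 < u -> ex_derive (hv j) u.
Proof.
  intros [c [Hd Hc]] Hu.
  apply exd_ext_loc with (fun v => fsum (fun k => fsum (fun l => Cfl c j k v * Cfl c j l v * mom al A B (k + l) v) (S j)) (S j)); [exact Hu| |].
  - intros v Hv. symmetry. apply hv_double; assumption.
  - eexists. apply (bil_deriv al A B (Cfl c j) (Cfl c j) (fun k => Derive (Cfl c j k) u) (fun k => Derive (Cfl c j k) u)); try assumption.
    all: intros k; apply Derive_correct; apply Cfl_exd; assumption.
Qed.

Lemma orth_u u n q : 0 < u -> IsPoly n q -> Lw al A B u (fun x => P n x u * q x) = 0.
Proof.
  intros Hu Hq.
  ops orth_lowP u Hu H. apply (H n n q (le_n n) Hq).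
Qed.

Lemma hv_deriv j u : SRep j -> 0 < u -> is_derive (hv j) u (- rhou al B u * P j u u ^ 2).
Proof.
  intros [c [Hd Hc]] Hu.
  set (C := Cfl c j). set (C' := fun k => Derive (C k) u).
  assert (HC : forall k, is_derive (C k) u (C' k)) by (intros k; apply Derive_correct; apply Cfl_exd; assumption).
  assert (Hrep : forall x, psum (fun k => C k u) (S j) x = P j x u) by (intros x; rewrite Hc by exact Hu; unfold C; rewrite Cfl_rep; reflexivity).
  assert (HCj : C' j = 0).
  { unfold C', C, Cfl. rewrite (Derive_ext _ (fun _ => 1)) by (intros; rewrite Nat.ltb_irrefl; reflexivity).
    apply is_derive_unique. apply is_derive_Reals, derivable_pt_lim_const. }
  assert (HIs : IsPoly j (psum C' (S j))).
  { exists C'. intros x. rewrite psum_top, HCj. ring. }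
  apply is_derive_ext_loc with (fun v => fsum (fun k => fsum (fun l => C k v * C l v * mom al A B (k + l) v) (S j)) (S j)).
  { generalize (locally_pos u Hu). apply filter_imp. intros v Hv. symmetry. apply hv_double; assumption. }
  pose proof (bil_deriv al A B C C C' C' (S j) (S j) u Hal HA HB Hu HC HC) as H.
  enough (E : Lw al A B u (fun x => psum C' (S j) x * psum (fun l => C l u) (S j) x) +
     Lw al A B u (fun x => psum (fun k => C k u) (S j) x * psum C' (S j) x) -
     rho al B u * psum (fun k => C k u) (S j) u * psum (fun l => C l u) (S j) u = - rhou al B u * P j u u ^ 2)
    by (rewrite <- E; exact H).
  rewrite (Lw_ext _ _ _ _ (fun x => psum C' (S j) x * psum (fun l => C l u) (S j) x) (fun x => P j x u * psum C' (S j) x)) by (intros; rewrite Hrep; ring).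
  rewrite (Lw_ext _ _ _ _ (fun x => psum (fun k => C k u) (S j) x * psum C' (S j) x) (fun x => P j x u * psum C' (S j) x)) by (intros; rewrite Hrep; ring).
  rewrite !Hrep.
  rewrite !orth_u by assumption. unfold rhou. ring.
Qed.

Lemma alv_exd j u : SRep j -> 0 < u -> ex_derive (alv j) u.
Proof.
  intros HS Hu. unfold alv. apply exd_div.
  - destruct HS as [c [Hd Hc]].
    apply exd_ext_loc with (fun v => fsum (fun k => fsum (fun l => Sh (Cfl c j) k v * Cfl c j l v * mom al A B (k + l) v) (S j)) (S (S j))); [exact Hu| |].
    + intros v Hv. rewrite <- Lw_prod by assumption. apply Lw_ext. intros x.
      rewrite Hc by exact Hv.
      replace (psum (fun k => Sh (Cfl c j) k v) (S (S j)) x) with (x * psum (fun k => Cfl c j k v) (S j) x).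
      * rewrite Cfl_rep. simpl. ring.
      * rewrite psum_mulx. apply psum_ext. intros k _. destruct k; reflexivity.
    + eexists. apply (bil_deriv al A B (Sh (Cfl c j)) (Cfl c j) (fun k => Derive (Sh (Cfl c j) k) u) (fun k => Derive (Cfl c j k) u)); try assumption.
      * intros k; apply Derive_correct. destruct k; simpl; [apply exd_const|apply Cfl_exd; assumption].
      * intros k; apply Derive_correct; apply Cfl_exd; assumption.
  - apply hv_exd; assumption.
  - apply Rgt_not_eq, hv_pos; assumption.
Qed.

Lemma SRep0 : SRep 0.
Proof.
  exists (fun _ _ => 0). split; [intros; apply exd_const|].
  intros u x Hu. ops P0_one u Hu H. specialize (H x). unfold Pu in H. rewrite H. simpl. ring.
Qed.

Lemma SRep1 : SRep 1.
Proof.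
  exists (fun _ v => -1 * alv 0 v). split.
  - intros k u Hu. apply (exd_mult (fun _ => -1) (alv 0)); [apply exd_const|apply alv_exd; [apply SRep0|exact Hu]].
  - intros u x Hu. ops P1_val u Hu H. specialize (H x). unfold Pu at 1 in H. rewrite H.
    simpl. unfold alv, hv. unfold alc, h, Lu, Pu. ring.
Qed.

Definition Cz (c : nat -> R -> R) n k v := if (k <? n)%nat then c k v else if (k =? n)%nat then 1 else 0.

Lemma Cz_rep c n v x : x ^ n + psum (fun k => c k v) n x = psum (fun k => Cz c n k v) (S (S n)) x.
Proof.
  rewrite (psum_top _ (S n)), psum_top. unfold Cz at 2 3.
  rewrite Nat.ltb_irrefl, Nat.eqb_refl.
  replace ((S n <? n)%nat) with false by (symmetry; apply Nat.ltb_ge; lia).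
  replace ((S n =? n)%nat) with false by (symmetry; apply Nat.eqb_neq; lia).
  rewrite (psum_ext (fun k => c k v) (fun k => Cz c n k v)). ring.
  intros k Hk. unfold Cz. apply Nat.ltb_lt in Hk. rewrite Hk. reflexivity.
Qed.

Lemma Cz_exd c n k u : (forall k u, 0 < u -> ex_derive (c k) u) -> 0 < u -> ex_derive (Cz c n k) u.
Proof.
  intros Hc Hu. unfold Cz. destruct (k <? n)%nat; [apply Hc; exact Hu|].
  destruct (k =? n)%nat; apply exd_const.
Qed.

Definition bev n v := hv (S n) v / hv n v.

Lemma SRepSS n : SRep n -> SRep (S n) -> SRep (S (S n)).
Proof.
  intros H0 H1. pose proof H0 as [c0 [Hd0 Hc0]]. pose proof H1 as [c1 [Hd1 Hc1]].
  exists (fun k v => Sh c1 k v - alv (S n) v * Cfl c1 (S n) k v - bev n v * Cz c0 n k v). split.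
  - intros k u Hu. apply exd_minus; [apply exd_minus|]; [| apply exd_mult | apply exd_mult].
    + unfold Sh. destruct k; simpl; [apply exd_const|apply Hd1; exact Hu].
    + apply alv_exd; assumption.
    + apply Cfl_exd; assumption.
    + unfold bev. apply exd_div; [apply hv_exd; assumption|apply hv_exd; assumption|].
      apply Rgt_not_eq, hv_pos; assumption.
    + apply Cz_exd; assumption.
  - intros u x Hu. ops recS u Hu H. specialize (H n x). unfold Pu in H.
    assert (E : P (S (S n)) x u = x * P (S n) x u - alv (S n) u * P (S n) x u - bev n u * P n x u).
    { rewrite H. unfold be, alc, h, Lu, bev, alv, hv. simpl. rewrite Nat.sub_0_r. ring. }
    rewrite E, (Hc1 u x Hu), (Hc0 u x Hu).
    assert (L1 : psum (fun k => Sh c1 k u - alv (S n) u * Cfl c1 (S n) k u - bev n u * Cz c0 n k u) (S (S n)) x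
             = psum (fun k => Sh c1 k u) (S (S n)) x - alv (S n) u * psum (fun k => Cfl c1 (S n) k u) (S (S n)) x
               - bev n u * psum (fun k => Cz c0 n k u) (S (S n)) x).
    { rewrite !psum_fsum, <- !fsum_scal, <- !fsum_minus. apply fsum_ext; intros; ring. }
    rewrite L1, <- Cfl_rep, <- Cz_rep.
    assert (L2 : psum (fun k => Sh c1 k u) (S (S n)) x = x * psum (fun k => c1 k u) (S n) x)
      by (rewrite psum_mulx; apply psum_ext; intros k _; reflexivity).
    rewrite L2. simpl. ring.
Qed.

Lemma SRep_all n : SRep n.
Proof.
  assert (H : forall n, SRep n /\ SRep (S n)).
  { induction n0 as [|m [IH1 IH2]]; [split; [apply SRep0|apply SRep1]|].
    split; [exact IH2|apply SRepSS; assumption]. }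
  apply H.
Qed.

End Smooth.

Section Final.
Variables al A B : R.
Hypothesis Hal : 0 < al.
Hypothesis HA : 0 <= A.
Hypothesis HB : 0 < B.
Variable P : nat -> R -> R -> R.
Hypothesis HP : monic_OPS al A B P.

Lemma hn_hv j u : hn al A B P j u = hv al A B P j u.
Proof. reflexivity. Qed.

Lemma Dn_pos k u : 0 < u -> 0 < Dn al A B P k u.
Proof.
  intros Hu. induction k; simpl; [lra|]. apply Rmult_lt_0_compat; [exact IHk|].
  rewrite hn_hv. apply hv_pos; assumption.
Qed.

Definition RR u j := rhou al B u * P j u u ^ 2 / hv al A B P j u.

Lemma lnD_deriv k u : 0 < u ->
  is_derive (fun s => ln (Dn al A B P k s)) u (- fsum (RR u) k).
Proof.
  intros Hu. induction k as [|k IH].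
  - simpl. apply is_derive_ext with (fun _ => 0).
    + intros; rewrite ln_1; reflexivity.
    + rewrite Ropp_0. apply is_derive_Reals, derivable_pt_lim_const.
  - apply is_derive_ext_loc with (fun s => ln (Dn al A B P k s) + ln (hv al A B P k s)).
    + generalize (locally_pos u Hu). apply filter_imp. intros v Hv. simpl.
      rewrite ln_mult; [reflexivity|apply Dn_pos; exact Hv|rewrite hn_hv; apply hv_pos; assumption].
    + simpl fsum. apply is_derive_Reals.
      replace (- (fsum (RR u) k + RR u k)) with (- fsum (RR u) k + / hv al A B P k u * (- rhou al B u * P k u u ^ 2)).
      2:{ unfold RR. field. apply Rgt_not_eq, hv_pos; assumption. }
      apply derivable_pt_lim_plus; [apply is_derive_Reals; exact IH|].
      apply (derivable_pt_lim_comp (hv al A B P k) ln).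
      * apply is_derive_Reals. apply (hv_deriv al A B Hal HA HB P HP); [apply (SRep_all al A B Hal HA HB P HP)|exact Hu].
      * apply derivable_pt_lim_ln. apply hv_pos; assumption.
Qed.

Lemma Hn_val k u : 0 < u -> Hn al A B P k u = u * (- fsum (RR u) k).
Proof.
  intros Hu. unfold Hn. f_equal. apply is_derive_unique. apply lnD_deriv; exact Hu.
Qed.

End Final.

Ltac opsg lem al A B P Hal HA HB HP u Hu H := pose proof (lem (Lu al A B u) al u (rhou al B u) (I_ext al A B u)
  (I_plus al A B Hal u Hu) (I_scal al A B Hal u Hu) (I_ibp al A B Hal u Hu) (Pu P u)
  (I_monic al A B P HP u Hu) (I_orth al A B P HP u Hu) (I_hpos al A B Hal HA HB P HP u Hu)) as H.

Theorem theorem7 (alpha A B t : R) (P : nat -> R -> R -> R) (n : nat) :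
  0 < alpha -> 0 <= A -> 0 < B -> 0 < t ->
  monic_OPS alpha A B P ->
  (1 <= n)%nat ->
  let H := fun k => Hn alpha A B P k t in
  let tR := t * Rn_t alpha A B P n t in
  let tr := t * rn_t alpha A B P n t in
  let NN := INR n * (INR n + alpha) in
  tR = H n - H (S n)
  /\ (t + H (S n) - H (n - 1)%nat - 2 * INR n - alpha <> 0 ->
      tr = ((H n - NN) * (t + H (S n) - H (n - 1)%nat) + t * NN)
           / (t + H (S n) - H (n - 1)%nat - 2 * INR n - alpha))
  /\ tr ^ 2 = (NN + tr - H n) * (tR ^ 2 + tR * (H (S n) + H (n - 1)%nat - 2 * H n)).
Proof.
  intros Hal HA HB Ht HP Hn1 H tR tr NN.
  destruct n as [|m]; [lia|].
  set (hS := hn alpha A B P (S m) t). set (h0 := hn alpha A B P m t).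
  set (rh := B * xpow t alpha * exp (- t)).
  set (RRn := rh * P (S m) t t ^ 2 / hS).
  set (RRm := rh * P m t t ^ 2 / h0).
  set (rrn := rh * P (S m) t t * P m t t / h0).
  set (bee := hS / h0).
  set (Sf := fun k => fsum (RR alpha A B P t) k).
  assert (HH : forall k, H k = t * - Sf k) by (intros; unfold H; apply Hn_val; assumption).
  assert (HSn : Sf (S (S m)) = Sf (S m) + RRn) by reflexivity.
  assert (HSm : Sf (S m) = Sf m + RRm) by reflexivity.
  assert (HtR : tR = t * RRn) by reflexivity.
  assert (Htr : tr = t * rrn).
  { unfold tr, rn_t. replace (S m - 1)%nat with m by lia. reflexivity. }
  assert (F1 : bee = t * rrn + (INR (S m) * (INR (S m) + alpha) + t * Sf (S m))).
  { opsg T1 alpha A B P Hal HA HB HP t Ht K1. opsg alc_sum alpha A B P Hal HA HB HP t Ht K2.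
    specialize (K1 m). specialize (K2 (S m)). rewrite K2 in K1.
    unfold be, rr in K1. replace (S m - 1)%nat with m in K1 by lia. exact K1. }
  assert (F2 : rrn ^ 2 = bee * RRn * RRm).
  { opsg T2 alpha A B P Hal HA HB HP t Ht K1. specialize (K1 m).
    unfold be, rr in K1. replace (S m - 1)%nat with m in K1 by lia. exact K1. }
  assert (F3 : INR (S m) * (INR (S m) + alpha) + (2 * INR (S m) + alpha) * rrn = bee * (1 - RRn - RRm)).
  { opsg T3 alpha A B P Hal HA HB HP t Ht K1. specialize (K1 m).
    unfold be, rr in K1. replace (S m - 1)%nat with m in K1 by lia. exact K1. }
  replace (S m - 1)%nat with m by lia.
  rewrite !HH, HtR, Htr. unfold NN. rewrite HSn, HSm in *.
  split; [ring|split].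
  - intros Hden.
    match goal with |- ?a = ?num / ?den => assert (Key : a * den = num) end.
    { apply Rminus_diag_uniq. rewrite F1 in F3.
      match type of F3 with ?l = ?r => transitivity (t * (r - l)); [ring|rewrite F3; ring] end. }
    match goal with |- ?a = ?num / ?den =>
      apply Rmult_eq_reg_r with den; [rewrite Key; field; exact Hden|exact Hden] end.
  - transitivity (t ^ 2 * rrn ^ 2); [ring|]. rewrite F2, F1. ring.
Qed.
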